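(* Let $\vartheta_0\in(0,1/8]$ and $T>0$. Assume $\omega:[0,T]\times\mathbb{T}\times[0,1]\to\mathbb{R}$ is a sufficiently smooth solution of $$\partial_t\omega+y\partial_x\omega+u\cdot\nabla\omega=0,\quad u=(u^x,u^y)=(-\partial_y\psi,\partial_x\psi),\quad \Delta\psi=\omega,\quad \psi(x,0)=\psi(x,1)=0,$$ with $\int_{\mathbb{T}\times[0,1]}\omega(t,x,y)\,dx\,dy=0$, such that $\omega(t)$ is supported in $\mathbb{T}\times[\vartheta_0,1-\vartheta_0]$ and $\|\langle\omega\rangle(t)\|_{H^{10}}$ is sufficiently small (so that the map $y\mapsto v(t,y)$ below is a smooth bijective change of coordinates) for all $t\in[0,T]$. Then there is $c_0\in\mathbb{R}$ such that $$\langle u^x\rangle(t,y)=c_0\quad\text{for all }t\in[0,T],\ y\in[0,\vartheta_0]\cup[1-\vartheta_0,1].$$ Define the change of coordinates $(z,v):\mathbb{T}\times[0,1]\to\mathbb{T}\times[c_0,c_0+1]$, $$v:=y+\frac1t\int_0^t\langle u^x\rangle(\tau,y)\,d\tau,\qquad z:=x-tv,$$ and new functions $f,\phi$ on $[0,T]\times\mathbb{T}\times[c_0,c_0+1]$ and $V',V'',\dot V,\mathcal{H}$ on $[0,T]\times[c_0,c_0+1]$ by $$f(t,z,v):=\omega(t,x,y),\quad \phi(t,z,v):=\psi(t,x,y),$$ $$V'(t,v):=\partial_yv(t,y),\quad V''(t,v):=\partial_{yy}v(t,y),\quad \dot V(t,v):=\partial_tv(t,y),\quad \mathcal{H}(t,v):=tV'(t,v)\partial_v\dot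 V(t,v).$$ Then $\mathcal{H}=1-V'-\langle f\rangle$; the functions $f$, $V'-1$ and $\mathcal{H}$ are supported in $v\in[c_0+\vartheta_0,c_0+1-\vartheta_0]$; and they satisfy the evolution equations $$\partial_tf=V'\partial_vP_{\neq0}\phi\,\partial_zf-(\dot V+V'\partial_z\phi)\,\partial_vf,$$ $$\partial_t(V'-1)=\mathcal{H}/t-\dot V\partial_v(V'-1),$$ $$\partial_t\mathcal{H}=-\mathcal{H}/t-\dot V\partial_v\mathcal{H}-V'\langle\partial_vP_{\neq0}\phi\,\partial_zf\rangle+V'\langle\partial_z\phi\,\partial_vf\rangle.$$ Moreover $\phi$, $V''$, $\dot V$ satisfy $$\partial_z^2\phi+(V')^2(\partial_v-t\partial_z)^2\phi+V''(\partial_v-t\partial_z)\phi=f,$$ $$\partial_v\dot V=\mathcal{H}/(tV'),\qquad \dot V(t,c_0)=\dot V(t,1+c_0)=0,\qquad V''=V'\partial_vV'.$$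
   Context: $\mathbb{T}=\mathbb{R}/(2\pi\mathbb{Z})$. For a function $H$ of $(x,y)$ (resp. of $(z,v)$), $\langle H\rangle$ denotes its average over the periodic variable $x$ (resp. $z$), and $P_{\neq0}H:=H-\langle H\rangle$. The functions $V',V'',\dot V$ are the functions $\partial_yv,\partial_{yy}v,\partial_tv$ expressed in the variables $(t,v)$. *)

(* Defs.v *)
From Stdlib Require Import Reals List.
From Coquelicot Require Import Coquelicot.
Open Scope R_scope.

Definition d_t (F : R -> R -> R -> R) (t a b : R) : R := Derive (fun s => F s a b) t.
Definition d_1 (F : R -> R -> R -> R) (t a b : R) : R := Derive (fun s => F t s b) a.
Definition d_2 (F : R -> R -> R -> R) (t a b : R) : R := Derive (fun s => F t a s) b.

Definition dt2 (G : R -> R -> R) (t w : R) : R := Derive (fun s => G s w) t.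
Definition dw2 (G : R -> R -> R) (t w : R) : R := Derive (fun s => G t s) w.

Inductive dop := Dt | D1 | D2.
Definition apply_d (d : dop) (F : R -> R -> R -> R) : R -> R -> R -> R :=
  match d with Dt => d_t F | D1 => d_1 F | D2 => d_2 F end.
Definition apply_ds (l : list dop) (F : R -> R -> R -> R) : R -> R -> R -> R :=
  fold_right apply_d F l.
Definition smooth3 (F : R -> R -> R -> R) : Prop :=
  forall l : list dop, forall t a b : R,
    let G := apply_ds l F in
    ex_derive (fun s => G s a b) t /\ ex_derive (fun s => G t s b) a /\
    ex_derive (fun s => G t a s) b /\
    continuous (fun p : R * R * R => G (fst (fst p)) (snd (fst p)) (snd p)) (t, a, b).

Definition avg (h : R -> R) : R := / (2 * PI) * RInt h 0 (2 * PI).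
Definition avgz (F : R -> R -> R -> R) (t w : R) : R := avg (fun z => F t z w).
Definition Pne0 (F : R -> R -> R -> R) (t z w : R) : R := F t z w - avgz F t w.

Definition H10norm (g : R -> R) : R :=
  sqrt (sum_f_R0 (fun k => RInt (fun y => (Derive_n g k y) ^ 2) 0 1) 10).

Definition ux (psi : R -> R -> R -> R) (t x y : R) : R := - d_2 psi t x y.

Definition vmap (psi : R -> R -> R -> R) (t y : R) : R :=
  y + / t * RInt (fun tau => avgz (ux psi) tau y) 0 t.

(* Main.v *)
Require Import Defs.
From Stdlib Require Import Reals Lra Psatz List ClassicalEpsilon.
From Coquelicot Require Import Coquelicot.
Open Scope R_scope.

Definition Ct1 (g : R -> R) a := forall eps, 0 < eps -> exists del, 0 < del /\
  forall a', Rabs (a'-a) < del -> Rabs (g a' - g a) < eps.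
Definition C2 (G : R -> R -> R) a b := forall eps, 0 < eps -> exists del, 0 < del /\
  forall a' b', Rabs (a'-a) < del -> Rabs (b'-b) < del -> Rabs (G a' b' - G a b) < eps.
Definition C3 (G : R -> R -> R -> R) a b c := forall eps, 0 < eps -> exists del, 0 < del /\
  forall a' b' c', Rabs (a'-a) < del -> Rabs (b'-b) < del -> Rabs (c'-c) < del ->
   Rabs (G a' b' c' - G a b c) < eps.

Lemma Ct1_continuous g a : Ct1 g a -> continuous g a.
Proof.
  intros H. apply filterlim_locally. intros [e He].
  destruct (H e He) as [d [Hd Hd']]. exists (mkposreal d Hd). intros y Hy.
  now apply Hd'.
Qed.

Lemma continuous_Ct1 g a : continuous g a -> Ct1 g a.
Proof.
  intros H e He. apply filterlim_locally with (eps := mkposreal e He) in H.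
  destruct H as [[d Hd] H]. exists d; split; [assumption|]. intros a' Ha. apply (H a' Ha).
Qed.

Lemma Ct1_continuity_pt g a : Ct1 g a -> continuity_pt g a.
Proof. intros H. apply continuity_pt_filterlim. apply Ct1_continuous. exact H. Qed.

Lemma C2_2d G a b : C2 G a b -> continuity_2d_pt G a b.
Proof.
  intros H [e He]. destruct (H e He) as [d [Hd Hd']]. exists (mkposreal d Hd).
  intros u v Hu Hv. apply Hd'; auto.
Qed.

Lemma C2_of_2d G a b : continuity_2d_pt G a b -> C2 G a b.
Proof.
  intros H e He. destruct (H (mkposreal e He)) as [[d Hd] Hd']. exists d; split; [assumption|].
  intros; apply Hd'; auto.
Qed.

Lemma cont3_C3 (G : R -> R -> R -> R) t a b :
  continuous (fun p : R * R * R => G (fst (fst p)) (snd (fst p)) (snd p)) (t, a, b) ->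
  C3 G t a b.
Proof.
  intros H e He. apply filterlim_locally with (eps := mkposreal e He) in H.
  destruct H as [[d Hd] H]. exists d; split; [assumption|]. intros t' a' b' H1 H2 H3.
  apply (H (t', a', b')). simpl. split; [split|]; assumption.
Qed.

Lemma C3_C1_1 G a b c : C3 G a b c -> Ct1 (fun s => G a s c) b.
Proof.
  intros H e He. destruct (H e He) as [d [Hd H']]. exists d; split; [assumption|].
  intros. apply H'; auto; rewrite Rminus_diag, Rabs_R0; auto.
Qed.
Lemma C3_C1_0 G a b c : C3 G a b c -> Ct1 (fun s => G s b c) a.
Proof.
  intros H e He. destruct (H e He) as [d [Hd H']]. exists d; split; [assumption|].
  intros. apply H'; auto; rewrite Rminus_diag, Rabs_R0; auto.
Qed.
Lemma C3_C1_2 G a b c : C3 G a b c -> Ct1 (fun s => G a b s) c.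
Proof.
  intros H e He. destruct (H e He) as [d [Hd H']]. exists d; split; [assumption|].
  intros. apply H'; auto; rewrite Rminus_diag, Rabs_R0; auto.
Qed.

Lemma derive_od f x l : is_derive f x l ->
  forall eps, 0 < eps -> exists del, 0 < del /\ forall y, Rabs (y - x) < del ->
    Rabs (f y - f x - l * (y - x)) <= eps * Rabs (y - x).
Proof.
  intros H e He. apply is_derive_Reals in H. destruct (H e He) as [[d Hd] H'].
  exists d; split; [assumption|]. intros y Hy.
  destruct (Req_dec y x) as [->|Hne].
  - rewrite !Rminus_diag, Rmult_0_r, Rminus_0_r, Rabs_R0, Rmult_0_r; lra.
  - specialize (H' (y - x) ltac:(lra) Hy). replace (x + (y - x)) with y in H' by ring.
    assert (Hh : Rabs (y - x) > 0) by (apply Rabs_pos_lt; lra).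
    replace (f y - f x - l * (y - x)) with (((f y - f x) / (y - x) - l) * (y - x)) by (field; lra).
    rewrite Rabs_mult. apply Rmult_le_compat_r; lra.
Qed.

Lemma od_derive f x l :
  (forall eps, 0 < eps -> exists del, 0 < del /\ forall y, Rabs (y - x) < del ->
    Rabs (f y - f x - l * (y - x)) <= eps * Rabs (y - x)) -> is_derive f x l.
Proof.
  intros H. apply is_derive_Reals. intros e He.
  destruct (H (e/2) ltac:(lra)) as [d [Hd H']]. exists (mkposreal d Hd).
  intros h Hh Hhd. specialize (H' (x + h)). replace (x + h - x) with h in H' by ring.
  specialize (H' Hhd). simpl in *.
  assert (Hh' : Rabs h > 0) by (apply Rabs_pos_lt; lra).
  replace ((f (x + h) - f x) / h - l) with ((f (x + h) - f x - l * h) / h) by (field; lra).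
  rewrite Rabs_div by lra. apply (Rmult_lt_reg_r (Rabs h)); auto.
  unfold Rdiv. rewrite Rmult_assoc, Rinv_l by lra. nra.
Qed.

Lemma mvt_between (g : R -> R) u u' :
  (forall x, Rmin u u' <= x <= Rmax u u' -> ex_derive g x) ->
  exists xi, Rmin u u' <= xi <= Rmax u u' /\ g u' - g u = Derive g xi * (u' - u).
Proof.
  intros H. destruct (MVT_gen g u u' (Derive g)) as [xi [H1 H2]].
  - intros x Hx. apply Derive_correct, H. lra.
  - intros x Hx. apply continuity_pt_filterlim. exact (ex_derive_continuous g x (H x Hx)).
  - exists xi; split; auto.
Qed.

Lemma between_abs u u' x : Rmin u u' <= x <= Rmax u u' -> Rabs (x - u) <= Rabs (u' - u).
Proof.
  intros [H1 H2]. unfold Rmin, Rmax in *. destruct (Rle_dec u u');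
  unfold Rabs; repeat destruct Rcase_abs; lra.
Qed.

Definition diff3 (F : R -> R -> R -> R) a b c := exists del, 0 < del /\
  (forall a' b' c', Rabs (a'-a) < del -> Rabs (b'-b) < del -> Rabs (c'-c) < del ->
     ex_derive (fun s => F s b' c') a' /\ ex_derive (fun s => F a' s c') b' /\
     ex_derive (fun s => F a' b' s) c') /\
  C3 (d_t F) a b c /\ C3 (d_1 F) a b c /\ C3 (d_2 F) a b c.

Lemma frechet3 F a b c : diff3 F a b c ->
  forall eps, 0 < eps -> exists del, 0 < del /\ forall a' b' c',
   Rabs (a'-a) < del -> Rabs (b'-b) < del -> Rabs (c'-c) < del ->
   Rabs (F a' b' c' - F a b c - (d_t F a b c * (a' - a) + d_1 F a b c * (b' - b)
      + d_2 F a b c * (c' - c))) <= eps * (Rabs (a'-a) + Rabs (b'-b) + Rabs (c'-c)).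
Proof.
  intros [d0 [Hd0 [Hex [C0 [Ct1' C2']]]]] e He.
  destruct (C0 e He) as [d1 [Hd1 H1]].
  destruct (Ct1' e He) as [d2 [Hd2 H2]].
  destruct (C2' e He) as [d3 [Hd3 H3]].
  set (d := Rmin d0 (Rmin d1 (Rmin d2 d3))).
  assert (Hd : 0 < d) by (unfold d; repeat apply Rmin_glb_lt; auto).
  assert (Hdd : d <= d0 /\ d <= d1 /\ d <= d2 /\ d <= d3).
  { unfold d. pose proof (Rmin_l d0 (Rmin d1 (Rmin d2 d3))); pose proof (Rmin_r d0 (Rmin d1 (Rmin d2 d3)));
    pose proof (Rmin_l d1 (Rmin d2 d3)); pose proof (Rmin_r d1 (Rmin d2 d3));
    pose proof (Rmin_l d2 d3); pose proof (Rmin_r d2 d3). lra. }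
  exists d; split; [exact Hd|]. intros a' b' c' Ha Hb Hc.
  assert (Z : Rabs (a - a) = 0) by (rewrite Rminus_diag; apply Rabs_R0).
  assert (Zb : Rabs (b - b) = 0) by (rewrite Rminus_diag; apply Rabs_R0).
  destruct (mvt_between (fun s => F s b' c') a a') as [xi [Hxi E1]].
  { intros x Hx. apply between_abs in Hx. apply (Hex x b' c'); lra. }
  destruct (mvt_between (fun s => F a s c') b b') as [eta [Heta E2]].
  { intros x Hx. apply between_abs in Hx. apply (Hex a x c'); lra. }
  destruct (mvt_between (fun s => F a b s) c c') as [zeta [Hzeta E3]].
  { intros x Hx. apply between_abs in Hx. apply (Hex a b x); lra. }
  apply between_abs in Hxi. apply between_abs in Heta. apply between_abs in Hzeta.
  simpl in E1, E2, E3.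
  assert (K1 : Rabs (d_t F xi b' c' - d_t F a b c) < e) by (apply H1; lra).
  assert (K2 : Rabs (d_1 F a eta c' - d_1 F a b c) < e) by (apply H2; lra).
  assert (K3 : Rabs (d_2 F a b zeta - d_2 F a b c) < e) by (apply H3; lra).
  unfold d_t, d_1, d_2 in *.
  replace (F a' b' c' - F a b c - (Derive (fun s => F s b c) a * (a' - a) +
     Derive (fun s => F a s c) b * (b' - b) + Derive (fun s => F a b s) c * (c' - c)))
  with ((Derive (fun s => F s b' c') xi - Derive (fun s => F s b c) a) * (a' - a)
      + (Derive (fun s => F a s c') eta - Derive (fun s => F a s c) b) * (b' - b)
      + (Derive (fun s => F a b s) zeta - Derive (fun s => F a b s) c) * (c' - c)) by lra.
  eapply Rle_trans; [apply Rabs_triang|].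
  eapply Rle_trans; [apply Rplus_le_compat_r; apply Rabs_triang|].
  rewrite !Rabs_mult.
  assert (P1 := Rabs_pos (a'-a)). assert (P2 := Rabs_pos (b'-b)). assert (P3 := Rabs_pos (c'-c)).
  nra.
Qed.

Lemma chain3 F al be ga s0 al' be' ga' :
  diff3 F (al s0) (be s0) (ga s0) ->
  is_derive al s0 al' -> is_derive be s0 be' -> is_derive ga s0 ga' ->
  is_derive (fun s => F (al s) (be s) (ga s)) s0
    (d_t F (al s0) (be s0) (ga s0) * al' + d_1 F (al s0) (be s0) (ga s0) * be'
     + d_2 F (al s0) (be s0) (ga s0) * ga').
Proof.
  intros HF Ha Hb Hc. apply od_derive. intros e He.
  set (D0 := d_t F (al s0) (be s0) (ga s0)).
  set (D1 := d_1 F (al s0) (be s0) (ga s0)).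
  set (D2 := d_2 F (al s0) (be s0) (ga s0)).
  set (K := Rabs al' + Rabs be' + Rabs ga' + 3).
  set (M := Rabs D0 + Rabs D1 + Rabs D2 + 1).
  assert (HK : 0 < K) by (unfold K; pose proof (Rabs_pos al'); pose proof (Rabs_pos be');
     pose proof (Rabs_pos ga'); lra).
  assert (HM : 0 < M) by (unfold M; pose proof (Rabs_pos D0); pose proof (Rabs_pos D1);
     pose proof (Rabs_pos D2); lra).
  destruct (frechet3 F _ _ _ HF (e / (2 * K))) as [dF [HdF HF']].
  { apply Rdiv_lt_0_compat; lra. }
  set (e2 := Rmin 1 (e / (2 * M))).
  assert (He2 : 0 < e2) by (unfold e2; apply Rmin_glb_lt; [lra| apply Rdiv_lt_0_compat; lra]).
  assert (He2a : e2 <= 1) by apply Rmin_l.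
  assert (He2b : e2 * M <= e / 2).
  { unfold e2. apply Rle_trans with (e / (2 * M) * M).
    apply Rmult_le_compat_r; [lra| apply Rmin_r]. right; field; lra. }
  destruct (derive_od _ _ _ Ha e2 He2) as [da [Hda Ha']].
  destruct (derive_od _ _ _ Hb e2 He2) as [db [Hdb Hb']].
  destruct (derive_od _ _ _ Hc e2 He2) as [dc [Hdc Hc']].
  set (d := Rmin (Rmin da db) (Rmin dc (dF / K))).
  assert (Hd : 0 < d).
  { unfold d. repeat apply Rmin_glb_lt; auto. apply Rdiv_lt_0_compat; lra. }
  assert (Hdd : d <= da /\ d <= db /\ d <= dc /\ d <= dF / K).
  { unfold d. pose proof (Rmin_l (Rmin da db) (Rmin dc (dF / K))); pose proof (Rmin_r (Rmin da db) (Rmin dc (dF / K)));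
    pose proof (Rmin_l da db); pose proof (Rmin_r da db);
    pose proof (Rmin_l dc (dF / K)); pose proof (Rmin_r dc (dF / K)). lra. }
  exists d; split; [exact Hd|]. intros y Hy.
  set (h := Rabs (y - s0)).
  assert (Hh : 0 <= h) by apply Rabs_pos.
  specialize (Ha' y ltac:(lra)). specialize (Hb' y ltac:(lra)). specialize (Hc' y ltac:(lra)).
  fold h in Ha', Hb', Hc'.
  assert (Bnd : forall (u : R -> R) u', Rabs (u y - u s0 - u' * (y - s0)) <= e2 * h ->
            Rabs (u y - u s0) <= (Rabs u' + 1) * h).
  { intros u u' Hu. replace (u y - u s0) with ((u y - u s0 - u' * (y - s0)) + u' * (y - s0)) by ring.
    eapply Rle_trans; [apply Rabs_triang|]. rewrite Rabs_mult. fold h. nra. }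
  pose proof (Bnd _ _ Ha') as Ba. pose proof (Bnd _ _ Hb') as Bb. pose proof (Bnd _ _ Hc') as Bc.
  assert (HhK : h * K < dF).
  { apply Rlt_le_trans with (d * K).
    - apply Rmult_lt_compat_r; [lra|]. unfold h; lra.
    - apply Rle_trans with (dF / K * K). apply Rmult_le_compat_r; lra. right; field; lra. }
  assert (P1 := Rabs_pos al'). assert (P2 := Rabs_pos be'). assert (P3 := Rabs_pos ga').
  assert (Sum : Rabs (al y - al s0) + Rabs (be y - be s0) + Rabs (ga y - ga s0) <= K * h).
  { unfold K. nra. }
  specialize (HF' (al y) (be y) (ga y)).
  assert (HF'' := HF' ltac:(unfold K in *; nra) ltac:(unfold K in *; nra) ltac:(unfold K in *; nra)).
  fold D0 D1 D2 in HF''.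
  replace (F (al y) (be y) (ga y) - F (al s0) (be s0) (ga s0) - (D0 * al' + D1 * be' + D2 * ga') * (y - s0))
    with ((F (al y) (be y) (ga y) - F (al s0) (be s0) (ga s0) - (D0 * (al y - al s0) + D1 * (be y - be s0) + D2 * (ga y - ga s0)))
          + (D0 * (al y - al s0 - al' * (y - s0)) + D1 * (be y - be s0 - be' * (y - s0))
             + D2 * (ga y - ga s0 - ga' * (y - s0)))) by ring.
  eapply Rle_trans; [apply Rabs_triang|].
  assert (Q : Rabs (D0 * (al y - al s0 - al' * (y - s0)) + D1 * (be y - be s0 - be' * (y - s0))
             + D2 * (ga y - ga s0 - ga' * (y - s0))) <= M * (e2 * h)).
  { eapply Rle_trans; [apply Rabs_triang|].
    eapply Rle_trans; [apply Rplus_le_compat_r; apply Rabs_triang|]. rewrite !Rabs_mult.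
    pose proof (Rabs_pos D0); pose proof (Rabs_pos D1); pose proof (Rabs_pos D2).
    unfold M. nra. }
  assert (Q2 : e / (2 * K) * (Rabs (al y - al s0) + Rabs (be y - be s0) + Rabs (ga y - ga s0)) <= e / 2 * h).
  { apply Rle_trans with (e / (2 * K) * (K * h)). apply Rmult_le_compat_l; auto.
    left; apply Rdiv_lt_0_compat; lra. right; field; lra. }
  nra.
Qed.

Lemma smooth3_dt F : smooth3 F -> smooth3 (d_t F).
Proof. intros H l. specialize (H (l ++ Dt :: nil)). unfold apply_ds in *.
  rewrite fold_right_app in H. exact H. Qed.
Lemma smooth3_d1 F : smooth3 F -> smooth3 (d_1 F).
Proof. intros H l. specialize (H (l ++ D1 :: nil)). unfold apply_ds in *.
  rewrite fold_right_app in H. exact H. Qed.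
Lemma smooth3_d2 F : smooth3 F -> smooth3 (d_2 F).
Proof. intros H l. specialize (H (l ++ D2 :: nil)). unfold apply_ds in *.
  rewrite fold_right_app in H. exact H. Qed.

Lemma smooth3_C3 F t a b : smooth3 F -> C3 F t a b.
Proof. intros H. apply cont3_C3. apply (H nil). Qed.

Lemma smooth3_ex F t a b : smooth3 F ->
  ex_derive (fun s => F s a b) t /\ ex_derive (fun s => F t s b) a /\ ex_derive (fun s => F t a s) b.
Proof. intros H. destruct (H nil t a b) as [H1 [H2 [H3 _]]]. auto. Qed.

Lemma smooth3_diff3 F t a b : smooth3 F -> diff3 F t a b.
Proof.
  intros H. exists 1; split; [lra|]. split.
  - intros. apply smooth3_ex; auto.
  - split; [|split]; apply smooth3_C3; [apply smooth3_dt|apply smooth3_d1|apply smooth3_d2]; auto.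
Qed.

Lemma C3_cont_1 F t a b : C3 F t a b -> continuous (fun s => F t s b) a.
Proof. intros H. apply Ct1_continuous, C3_C1_1, H. Qed.

Lemma smooth3_exRInt_1 F t b c d : smooth3 F -> ex_RInt (fun s => F t s b) c d.
Proof. intros H. apply (ex_RInt_continuous (V := R_CompleteNormedModule)). intros. apply C3_cont_1, smooth3_C3, H. Qed.

Lemma param_cont_le (h : R -> R -> R -> R) a b p q : a <= b ->
  (forall x p q, C3 h x p q) -> C2 (fun p q => RInt (fun x => h x p q) a b) p q.
Proof.
  intros Hab Hc e He.
  set (e' := e / (2 * (b - a) + 2)).
  assert (He' : 0 < e') by (unfold e'; apply Rdiv_lt_0_compat; lra).
  assert (X : forall x, {d : posreal | forall x' p' q', Rabs (x' - x) < d -> Rabs (p' - p) < d ->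
             Rabs (q' - q) < d -> Rabs (h x' p' q' - h x p q) < e'}).
  { intros x. apply constructive_indefinite_description.
    destruct (Hc x p q e' He') as [d [Hd H]]. exists (mkposreal d Hd). exact H. }
  set (delta := fun x => proj1_sig (X x)).
  destruct (compactness_value_1d a b delta) as [d Hd].
  exists d; split; [apply cond_pos|]. intros p' q' Hp Hq.
  assert (Ex : forall p q, ex_RInt (fun x => h x p q) a b).
  { intros. apply (ex_RInt_continuous (V := R_CompleteNormedModule)). intros z _. apply Ct1_continuous, C3_C1_0, Hc. }
  assert (E : RInt (fun x => h x p' q') a b - RInt (fun x => h x p q) a b =
              RInt (fun x => h x p' q' - h x p q) a b).
  { symmetry. apply (RInt_minus (V := R_CompleteNormedModule)); apply Ex. }
  rewrite E.
  apply Rle_lt_trans with ((b - a) * (2 * e')).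
  - apply abs_RInt_le_const; auto.
    + apply (ex_RInt_minus (V := R_NormedModule)); apply Ex.
    + intros x Hx. apply Rnot_lt_le. intros Hcon. apply (Hd x Hx).
      intros [t [Ht [Hxt Hdt]]].
      pose proof (proj2_sig (X t)) as Pt. fold (delta t) in Pt.
      assert (A1 := Pt x p' q' Hxt ltac:(lra) ltac:(lra)).
      assert (A2 := Pt x p q Hxt ltac:(rewrite Rminus_diag, Rabs_R0; apply cond_pos)
                                   ltac:(rewrite Rminus_diag, Rabs_R0; apply cond_pos)).
      assert (A3 : Rabs (h x p' q' - h x p q) <= Rabs (h x p' q' - h t p q) + Rabs (h x p q - h t p q)).
      { replace (h x p' q' - h x p q) with ((h x p' q' - h t p q) - (h x p q - h t p q)) by ring.
        eapply Rle_trans; [apply Rabs_triang|]. rewrite Rabs_Ropp. lra. }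
      lra.
  - unfold e'. apply Rle_lt_trans with (e * ((2 * (b - a)) / (2 * (b - a) + 2))).
    + right. field. lra.
    + rewrite <- (Rmult_1_r e) at 2. apply Rmult_lt_compat_l; auto.
      apply Rmult_lt_reg_r with (2 * (b - a) + 2); [lra|].
      unfold Rdiv. rewrite Rmult_assoc, Rinv_l by lra. lra.
Qed.

Lemma param_cont (h : R -> R -> R -> R) a b p q :
  (forall x p q, C3 h x p q) -> C2 (fun p q => RInt (fun x => h x p q) a b) p q.
Proof.
  intros Hc. destruct (Rle_dec a b) as [Hab|Hab].
  - apply param_cont_le; auto.
  - assert (Ex : forall p q, ex_RInt (fun x => h x p q) b a).
    { intros. apply (ex_RInt_continuous (V := R_CompleteNormedModule)). intros z _. apply Ct1_continuous, C3_C1_0, Hc. }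
    intros e He. destruct (param_cont_le h b a p q ltac:(lra) Hc e He) as [d [Hd H]].
    exists d; split; [exact Hd|]. intros p' q' H1 H2.
    rewrite <- (opp_RInt_swap (V := R_CompleteNormedModule) (fun x => h x p' q')) by apply Ex.
    rewrite <- (opp_RInt_swap (V := R_CompleteNormedModule) (fun x => h x p q)) by apply Ex.
    unfold opp; simpl. replace (- RInt (fun x : R => h x p' q') b a - - RInt (fun x : R => h x p q) b a)
      with (- (RInt (fun x : R => h x p' q') b a - RInt (fun x : R => h x p q) b a)) by ring.
    rewrite Rabs_Ropp. apply H; auto.
Qed.

Lemma C2_ext G G' a b : (forall a b, G a b = G' a b) -> C2 G a b -> C2 G' a b.
Proof. intros E H e He. destruct (H e He) as [d [Hd H']]. exists d; split; auto.
  intros. rewrite <- !E. auto. Qed.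
Lemma C2_plus G G' a b : C2 G a b -> C2 G' a b -> C2 (fun a b => G a b + G' a b) a b.
Proof. intros H H'. apply C2_of_2d, continuity_2d_pt_plus; apply C2_2d; auto. Qed.
Lemma C2_minus G G' a b : C2 G a b -> C2 G' a b -> C2 (fun a b => G a b - G' a b) a b.
Proof. intros H H'. apply C2_of_2d, continuity_2d_pt_minus; apply C2_2d; auto. Qed.
Lemma C2_mult G G' a b : C2 G a b -> C2 G' a b -> C2 (fun a b => G a b * G' a b) a b.
Proof. intros H H'. apply C2_of_2d, continuity_2d_pt_mult; apply C2_2d; auto. Qed.
Lemma C2_const c a b : C2 (fun _ _ => c) a b.
Proof. apply C2_of_2d, continuity_2d_pt_const. Qed.
Lemma C2_id1 a b : C2 (fun u v : R => u) a b.
Proof. apply C2_of_2d, continuity_2d_pt_id1. Qed.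
Lemma C2_id2 a b : C2 (fun u v : R => v) a b.
Proof. apply C2_of_2d, continuity_2d_pt_id2. Qed.
Lemma C2_inv G a b : C2 G a b -> G a b <> 0 -> C2 (fun a b => / G a b) a b.
Proof. intros H H'. apply C2_of_2d, continuity_2d_pt_inv; auto; apply C2_2d; auto. Qed.
Lemma C2_swap G a b : C2 G a b -> C2 (fun b a => G a b) b a.
Proof. intros H e He. destruct (H e He) as [d [Hd H']]. exists d; split; auto. Qed.
Lemma C2_C1_1 G a b : C2 G a b -> Ct1 (fun s => G a s) b.
Proof. intros H e He. destruct (H e He) as [d [Hd H']]. exists d; split; auto.
  intros. apply H'; auto. rewrite Rminus_diag, Rabs_R0; auto. Qed.
Lemma C2_C1_0 G a b : C2 G a b -> Ct1 (fun s => G s b) a.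
Proof. intros H e He. destruct (H e He) as [d [Hd H']]. exists d; split; auto.
  intros. apply H'; auto. rewrite Rminus_diag, Rabs_R0; auto. Qed.
Lemma C3_perm F p x q : C3 F p x q -> C3 (fun x p q => F p x q) x p q.
Proof. intros H e He. destruct (H e He) as [d [Hd H']]. exists d; split; auto. Qed.
Lemma C2_C3 G p q x : C2 G p q -> C3 (fun x p q => G p q) x p q.
Proof. intros H e He. destruct (H e He) as [d [Hd H']]. exists d; split; auto. Qed.
Lemma C2_C3' G p q x : C2 G p q -> C3 (fun x q p => G p q) x q p.
Proof. intros H e He. destruct (H e He) as [d [Hd H']]. exists d; split; auto. Qed.

Lemma C2_C3_13 G x p q : C2 G x q -> C3 (fun x p q => G x q) x p q.
Proof. intros H e He. destruct (H e He) as [d [Hd H']]. exists d; split; auto. Qed.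

Lemma exRInt_C2 G y a b : (forall t y, C2 G t y) -> ex_RInt (fun t => G t y) a b.
Proof. intros H. apply (ex_RInt_continuous (V := R_CompleteNormedModule)). intros.
  apply Ct1_continuous, C2_C1_0, H. Qed.

Lemma param_deriv (f : R -> R -> R) a b u0 :
  (forall u x, ex_derive (fun u => f u x) u) ->
  (forall u x, C2 (fun u v => Derive (fun z => f z v) u) u x) ->
  (forall u, ex_RInt (fun x => f u x) a b) ->
  is_derive (fun u => RInt (fun x => f u x) a b) u0 (RInt (fun x => Derive (fun u => f u x) u0) a b).
Proof.
  intros H1 H2 H3. apply (is_derive_RInt_param f a b u0).
  - exists (mkposreal 1 Rlt_0_1). intros. apply H1.
  - intros. apply C2_2d, H2.
  - exists (mkposreal 1 Rlt_0_1). intros. apply H3.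
Qed.

Lemma C3_C2_12 F t a b : C3 F t a b -> C2 (fun a b => F t a b) a b.
Proof. intros H e He. destruct (H e He) as [d [Hd H']]. exists d; split; auto.
  intros. apply H'; auto. rewrite Rminus_diag, Rabs_R0; auto. Qed.
Lemma C3_C2_02 F t a b : C3 F t a b -> C2 (fun t b => F t a b) t b.
Proof. intros H e He. destruct (H e He) as [d [Hd H']]. exists d; split; auto.
  intros. apply H'; auto. rewrite Rminus_diag, Rabs_R0; auto. Qed.
Lemma C3_C2_01 F t a b : C3 F t a b -> C2 (fun t a => F t a b) t a.
Proof. intros H e He. destruct (H e He) as [d [Hd H']]. exists d; split; auto.
  intros. apply H'; auto. rewrite Rminus_diag, Rabs_R0; auto. Qed.

Lemma avg_C2 F t y : smooth3 F -> C2 (avgz F) t y.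
Proof.
  intros H. unfold avgz, avg. apply C2_mult. apply C2_const.
  apply (param_cont (fun x p q => F p x q)). intros. apply C3_perm, smooth3_C3, H.
Qed.

Lemma avg_dy F t y : smooth3 F -> is_derive (fun s => avgz F t s) y (avgz (d_2 F) t y).
Proof.
  intros H. unfold avgz, avg. apply is_derive_scal.
  apply (param_deriv (fun u x => F t x u)).
  - intros. exact (proj2 (proj2 (smooth3_ex F t x u H))).
  - intros. apply (C2_swap (fun v u => d_2 F t v u)). apply C3_C2_12, smooth3_C3, smooth3_d2, H.
  - intros. apply (ex_RInt_continuous (V := R_CompleteNormedModule)). intros.
    apply Ct1_continuous, C3_C1_1, smooth3_C3, H.
Qed.

Lemma avg_dt F t y : smooth3 F -> is_derive (fun s => avgz F s y) t (avgz (d_t F) t y).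
Proof.
  intros H. unfold avgz, avg. apply is_derive_scal.
  apply (param_deriv (fun u x => F u x y)).
  - intros. exact (proj1 (smooth3_ex F u x y H)).
  - intros. exact (C3_C2_01 (d_t F) u x y (smooth3_C3 _ _ _ _ (smooth3_dt _ H))).
  - intros. apply (ex_RInt_continuous (V := R_CompleteNormedModule)). intros.
    apply Ct1_continuous, C3_C1_1, smooth3_C3, H.
Qed.

Definition diff2 (G : R -> R -> R) a b := exists del, 0 < del /\
  (forall a' b', Rabs (a'-a) < del -> Rabs (b'-b) < del ->
     ex_derive (fun s => G s b') a' /\ ex_derive (fun s => G a' s) b') /\
  C2 (dt2 G) a b /\ C2 (dw2 G) a b.

Lemma chain2 G al be s0 al' be' :
  diff2 G (al s0) (be s0) -> is_derive al s0 al' -> is_derive be s0 be' ->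
  is_derive (fun s => G (al s) (be s)) s0
    (dt2 G (al s0) (be s0) * al' + dw2 G (al s0) (be s0) * be').
Proof.
  intros [d [Hd [Hex [Ht Hw]]]] Ha Hb.
  assert (HF : diff3 (fun s (_ : R) y => G s y) (al s0) 0 (be s0)).
  { exists d; split; auto. split; [|split; [|split]].
    - intros a' b' c' H1 H2 H3. destruct (Hex a' c' H1 H3). split; [|split]; auto.
      apply ex_derive_const.
    - intros ep Hep. destruct (Ht ep Hep) as [d' [Hd' H']]. exists d'; split; auto.
      intros; apply H'; auto.
    - intros ep Hep. exists 1; split; [lra|]. intros. unfold d_1. rewrite !Derive_const.
      rewrite Rminus_diag, Rabs_R0; auto.
    - intros ep Hep. destruct (Hw ep Hep) as [d' [Hd' H']]. exists d'; split; auto.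
      intros; apply H'; auto. }
  pose proof (chain3 _ al (fun _ => 0) be s0 al' 0 be' HF Ha (is_derive_const _ _) Hb) as Hr.
  unfold d_t, d_1, d_2 in Hr. simpl in Hr. rewrite Derive_const in Hr.
  unfold dt2, dw2. replace (Derive (fun s : R => G s (be s0)) (al s0) * al' +
    Derive (fun s : R => G (al s0) s) (be s0) * be') with
    (Derive (fun s : R => G s (be s0)) (al s0) * al' + 0 * 0 +
    Derive (fun s : R => G (al s0) s) (be s0) * be') by ring. exact Hr.
Qed.

Lemma avg_diff2 F t y : smooth3 F -> diff2 (avgz F) t y.
Proof.
  intros H. exists 1; split; [lra|]. split; [|split].
  - intros. split; eexists; [apply avg_dt|apply avg_dy]; auto.
  - apply (C2_ext (avgz (d_t F))). intros. unfold dt2. symmetry. apply is_derive_unique, avg_dt, H.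
    apply avg_C2, smooth3_dt, H.
  - apply (C2_ext (avgz (d_2 F))). intros. unfold dw2. symmetry. apply is_derive_unique, avg_dy, H.
    apply avg_C2, smooth3_d2, H.
Qed.

Lemma abs_RInt_gen f a b M : ex_RInt f a b ->
  (forall x, Rmin a b <= x <= Rmax a b -> Rabs (f x) <= M) -> Rabs (RInt f a b) <= Rabs (b - a) * M.
Proof.
  intros Ex H. destruct (Rle_dec a b) as [Hab|Hab].
  - rewrite (Rabs_right (b - a)) by lra. apply abs_RInt_le_const; auto.
    intros; apply H. rewrite Rmin_left, Rmax_right; lra.
  - rewrite <- (opp_RInt_swap (V := R_CompleteNormedModule)).
    2: apply (ex_RInt_swap (V := R_NormedModule)); auto.
    unfold opp; simpl. rewrite Rabs_Ropp. rewrite (Rabs_left (b - a)) by lra.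
    replace (- (b - a)) with (a - b) by ring. apply abs_RInt_le_const; auto. lra.
    apply (ex_RInt_swap (V := R_NormedModule)); auto.
    intros; apply H. rewrite Rmin_right, Rmax_left; lra.
Qed.

Section IV.
Variable G : R -> R -> R.
Hypothesis HG : forall t y, C2 G t y.

Lemma IV_dt t y : is_derive (fun s => RInt (fun tau => G tau y) 0 s) t (G t y).
Proof.
  apply (is_derive_RInt (V := R_NormedModule) (fun tau => G tau y) _ 0 t).
  - exists (mkposreal 1 Rlt_0_1). intros. apply (RInt_correct (V := R_CompleteNormedModule)).
    apply exRInt_C2; auto.
  - apply Ct1_continuous, C2_C1_0, HG.
Qed.

Lemma IV_C2 t y : C2 (fun t y => RInt (fun tau => G tau y) 0 t) t y.
Proof.
  intros e He.
  destruct (param_cont (fun x p q => G x q) 0 t 0 y) with (eps := e / 2) as [d1 [Hd1 H1]].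
  { intros. apply C2_C3_13, HG. }
  { lra. }
  destruct (HG t y 1 Rlt_0_1) as [d2 [Hd2 H2]].
  set (M := Rabs (G t y) + 1).
  assert (HM : 0 < M) by (unfold M; pose proof (Rabs_pos (G t y)); lra).
  set (d := Rmin (Rmin d1 d2) (e / (2 * M))).
  assert (Hd : 0 < d) by (unfold d; repeat apply Rmin_glb_lt; auto; apply Rdiv_lt_0_compat; lra).
  assert (Hdd : d <= d1 /\ d <= d2 /\ d <= e / (2 * M)).
  { unfold d. pose proof (Rmin_l (Rmin d1 d2) (e / (2 * M))); pose proof (Rmin_r (Rmin d1 d2) (e / (2 * M)));
    pose proof (Rmin_l d1 d2); pose proof (Rmin_r d1 d2). lra. }
  exists d; split; [exact Hd|]. intros t' y' Ht Hy.
  rewrite <- (RInt_Chasles (V := R_CompleteNormedModule) (fun tau => G tau y') 0 t t')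
    by apply exRInt_C2, HG.
  unfold plus; simpl.
  specialize (H1 0 y' ltac:(rewrite Rminus_diag, Rabs_R0; lra) ltac:(lra)).
  assert (B : Rabs (RInt (fun tau => G tau y') t t') <= Rabs (t' - t) * M).
  { apply abs_RInt_gen. apply exRInt_C2, HG. intros x Hx.
    assert (Rabs (x - t) <= Rabs (t' - t)).
    { unfold Rmin, Rmax in Hx. destruct (Rle_dec t t'); unfold Rabs; repeat destruct Rcase_abs; lra. }
    specialize (H2 x y' ltac:(lra) ltac:(lra)).
    unfold M. pose proof (Rabs_triang_inv (G x y') (G t y)). lra. }
  assert (B2 : Rabs (t' - t) * M <= e / 2).
  { apply Rle_trans with (e / (2 * M) * M). apply Rmult_le_compat_r; lra. right; field; lra. }
  replace (RInt (fun tau : R => G tau y') 0 t + RInt (fun tau : R => G tau y') t t' -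
     RInt (fun tau : R => G tau y) 0 t) with
    ((RInt (fun tau : R => G tau y') 0 t - RInt (fun tau : R => G tau y) 0 t) +
      RInt (fun tau : R => G tau y') t t') by ring.
  eapply Rle_lt_trans; [apply Rabs_triang|]. lra.
Qed.

Hypothesis HGy : forall t y, ex_derive (fun z => G t z) y.
Hypothesis HGy' : forall t y, C2 (fun t y => Derive (fun z => G t z) y) t y.

Lemma IV_dy t y : is_derive (fun y => RInt (fun tau => G tau y) 0 t) y
   (RInt (fun tau => Derive (fun z => G tau z) y) 0 t).
Proof.
  apply (param_deriv (fun u x => G x u)).
  - intros. apply HGy.
  - intros. apply (C2_swap (fun x u => Derive (fun z => G x z) u)). apply HGy'.
  - intros. apply exRInt_C2, HG.
Qed.
End IV.

Lemma cplus (f g : R -> R) x : continuous f x -> continuous g x -> continuous (fun y => f y + g y) x.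
Proof. intros H1 H2. exact (continuous_plus (V := R_NormedModule) f g x H1 H2). Qed.
Lemma cminus (f g : R -> R) x : continuous f x -> continuous g x -> continuous (fun y => f y - g y) x.
Proof. intros H1 H2. exact (continuous_minus (V := R_NormedModule) f g x H1 H2). Qed.
Lemma cmult (f g : R -> R) x : continuous f x -> continuous g x -> continuous (fun y => f y * g y) x.
Proof. intros H1 H2. exact (continuous_mult (K := R_AbsRing) f g x H1 H2). Qed.
Lemma cconst (c : R) x : continuous (fun _ : R => c) x.
Proof. exact (continuous_const (U := R_UniformSpace) (V := R_UniformSpace) c x). Qed.
Lemma cid x : continuous (fun y : R => y) x.
Proof. exact (continuous_id (U := R_UniformSpace) x). Qed.

Lemma exR (g : R -> R) a b : (forall x, continuous g x) -> ex_RInt g a b.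
Proof. intros H. apply (ex_RInt_continuous (V := R_CompleteNormedModule)). intros; apply H. Qed.

Lemma RInt_plus' (g h : R -> R) a b : ex_RInt g a b -> ex_RInt h a b ->
  RInt (fun x => g x + h x) a b = RInt g a b + RInt h a b.
Proof. intros. exact (RInt_plus (V := R_CompleteNormedModule) g h a b H H0). Qed.
Lemma RInt_minus' (g h : R -> R) a b : ex_RInt g a b -> ex_RInt h a b ->
  RInt (fun x => g x - h x) a b = RInt g a b - RInt h a b.
Proof. intros. exact (RInt_minus (V := R_CompleteNormedModule) g h a b H H0). Qed.
Lemma RInt_scal' (g : R -> R) c a b : ex_RInt g a b ->
  RInt (fun x => c * g x) a b = c * RInt g a b.
Proof. intros. exact (RInt_scal (V := R_CompleteNormedModule) g a b c H). Qed.
Lemma RInt_const' (c a b : R) : RInt (fun _ => c) a b = (b - a) * c.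
Proof. exact (RInt_const (V := R_CompleteNormedModule) a b c). Qed.
Lemma RInt_ext' (g h : R -> R) a b : (forall x, Rmin a b < x < Rmax a b -> g x = h x) ->
  RInt g a b = RInt h a b.
Proof. intros. exact (RInt_ext (V := R_CompleteNormedModule) g h a b H). Qed.
Lemma RInt_Chasles' (g : R -> R) a b c : ex_RInt g a b -> ex_RInt g b c ->
  RInt g a b + RInt g b c = RInt g a c.
Proof. intros. exact (RInt_Chasles (V := R_CompleteNormedModule) g a b c H H0). Qed.

Lemma avg_plus (g h : R -> R) : (forall x, continuous g x) -> (forall x, continuous h x) ->
  avg (fun x => g x + h x) = avg g + avg h.
Proof. intros. unfold avg. rewrite RInt_plus' by (apply exR; auto). ring. Qed.
Lemma avg_minus (g h : R -> R) : (forall x, continuous g x) -> (forall x, continuous h x) ->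
  avg (fun x => g x - h x) = avg g - avg h.
Proof. intros. unfold avg. rewrite RInt_minus' by (apply exR; auto). ring. Qed.
Lemma avg_scal (g : R -> R) c : (forall x, continuous g x) ->
  avg (fun x => c * g x) = c * avg g.
Proof. intros. unfold avg. rewrite RInt_scal' by (apply exR; auto). ring. Qed.
Lemma avg_const c : avg (fun _ => c) = c.
Proof. unfold avg. rewrite RInt_const'. field. pose proof PI_RGT_0. lra. Qed.
Lemma avg_ext (g h : R -> R) : (forall x, g x = h x) -> avg g = avg h.
Proof. intros. unfold avg. f_equal. apply RInt_ext'. auto. Qed.

Lemma Derive_shift (g : R -> R) c x : ex_derive g (x + c) ->
  Derive (fun s => g (s + c)) x = Derive g (x + c).
Proof.
  intros H. apply is_derive_unique.
  assert (D : is_derive (fun s : R => s + c) x 1).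
  { auto_derive; auto; ring. }
  pose proof (is_derive_comp g (fun s => s + c) x _ _ (Derive_correct _ _ H) D) as E.
  unfold scal in E; simpl in E; unfold mult in E; simpl in E. rewrite Rmult_1_l in E. exact E.
Qed.

Definition periodic3 (F : R -> R -> R -> R) := forall t x y, F t (x + 2 * PI) y = F t x y.

Lemma periodic_d1 F : smooth3 F -> periodic3 F -> periodic3 (d_1 F).
Proof.
  intros Hs Hp t x y. unfold d_1.
  rewrite <- (Derive_shift (fun s => F t s y) (2 * PI) x)
    by exact (proj1 (proj2 (smooth3_ex F t (x + 2 * PI) y Hs))).
  apply Derive_ext. intros; apply Hp.
Qed.
Lemma periodic_d2 F : periodic3 F -> periodic3 (d_2 F).
Proof. intros Hp t x y. unfold d_2. apply Derive_ext. intros; apply Hp. Qed.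
Lemma periodic_dt F : periodic3 F -> periodic3 (d_t F).
Proof. intros Hp t x y. unfold d_t. apply Derive_ext. intros; apply Hp. Qed.

Lemma avg_d1_zero F t y : smooth3 F -> periodic3 F -> avgz (d_1 F) t y = 0.
Proof.
  intros Hs Hp. unfold avgz, avg, d_1.
  rewrite (RInt_Derive (fun s => F t s y)).
  - replace (2 * PI) with (0 + 2 * PI) by ring. rewrite Hp. ring.
  - intros. exact (proj1 (proj2 (smooth3_ex F t x y Hs))).
  - intros. apply (C3_cont_1 (d_1 F)), smooth3_C3, smooth3_d1, Hs.
Qed.

Lemma RInt_shift (g : R -> R) c : (forall x, continuous g x) -> (forall x, g (x + 2 * PI) = g x) ->
  RInt (fun z => g (z + c)) 0 (2 * PI) = RInt g 0 (2 * PI).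
Proof.
  intros Hc Hp.
  assert (E1 : RInt (fun z => g (z + c)) 0 (2 * PI) = RInt g c (2 * PI + c)).
  { pose proof (RInt_comp_lin (V := R_CompleteNormedModule) g 1 c 0 (2 * PI)) as E.
    replace (1 * 0 + c) with c in E by ring. replace (1 * (2 * PI) + c) with (2 * PI + c) in E by ring.
    rewrite <- E by (apply exR; auto). apply RInt_ext'. intros. unfold scal; simpl; unfold mult; simpl.
    rewrite !Rmult_1_l. reflexivity. }
  assert (E2 : RInt g (2 * PI) (2 * PI + c) = RInt g 0 c).
  { pose proof (RInt_comp_lin (V := R_CompleteNormedModule) g 1 (2 * PI) 0 c) as E.
    replace (1 * 0 + 2 * PI) with (2 * PI) in E by ring. replace (1 * c + 2 * PI) with (2 * PI + c) in E by ring.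
    rewrite <- E by (apply exR; auto). apply RInt_ext'. intros. unfold scal; simpl; unfold mult; simpl.
    rewrite Rmult_1_l. rewrite Rmult_1_l. apply Hp. }
  rewrite E1. rewrite <- (RInt_Chasles' g c (2 * PI) (2 * PI + c)) by (apply exR; auto).
  rewrite E2. rewrite Rplus_comm. apply RInt_Chasles'; apply exR; auto.
Qed.

Lemma avg_shift (g : R -> R) c : (forall x, continuous g x) -> (forall x, g (x + 2 * PI) = g x) ->
  avg (fun z => g (z + c)) = avg g.
Proof. intros. unfold avg. rewrite RInt_shift; auto. Qed.

Ltac rring := match goal with |- @eq _ ?a ?b => change (@eq R a b) end; ring.

Lemma sm_cont F t y : smooth3 F -> forall x, continuous (fun s => F t s y) x.
Proof. intros H x. apply C3_cont_1, smooth3_C3, H. Qed.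

Lemma avg_opp (g : R -> R) : (forall x, continuous g x) -> avg (fun x => - g x) = - avg g.
Proof. intros H. rewrite (avg_ext _ (fun x => -1 * g x)) by (intros; ring).
  rewrite avg_scal by auto. ring. Qed.

Lemma avgC2_cont_y F t y : smooth3 F -> continuous (fun s => avgz F t s) y.
Proof. intros H. apply Ct1_continuous, C2_C1_1, avg_C2, H. Qed.
Lemma avgC2_cont_t F t y : smooth3 F -> continuous (fun s => avgz F s y) t.
Proof. intros H. apply Ct1_continuous, C2_C1_0, avg_C2, H. Qed.

Lemma sum_f_R0_ge1 (f : nat -> R) n : (forall k, 0 <= f k) -> (1 <= n)%nat -> f 1%nat <= sum_f_R0 f n.
Proof.
  intros H Hn. induction n as [|n IH]. lia.
  destruct n. simpl. pose proof (H 0%nat). lra.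
  simpl sum_f_R0. pose proof (H (S (S n))). assert (f 1%nat <= sum_f_R0 f (S n)) by (apply IH; lia).
  simpl sum_f_R0 in H1. lra.
Qed.

Lemma C3_cont3 G t a b : C3 G t a b ->
  continuous (fun p : R * R * R => G (fst (fst p)) (snd (fst p)) (snd p)) (t, a, b).
Proof.
  intros H. apply filterlim_locally. intros [e He].
  destruct (H e He) as [d [Hd H']]. exists (mkposreal d Hd).
  intros [[t' a'] b'] [[H1 H2] H3]. simpl. apply H'; auto.
Qed.

Definition Cont3 (H : R -> R -> R -> R) := forall t x y, C3 H t x y.

Lemma Cont3_plus F G : Cont3 F -> Cont3 G -> Cont3 (fun t x y => F t x y + G t x y).
Proof. intros HF HG t x y. apply cont3_C3.
  exact (continuous_plus (V := R_NormedModule) _ _ _ (C3_cont3 _ _ _ _ (HF t x y)) (C3_cont3 _ _ _ _ (HG t x y))). Qed.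
Lemma Cont3_minus F G : Cont3 F -> Cont3 G -> Cont3 (fun t x y => F t x y - G t x y).
Proof. intros HF HG t x y. apply cont3_C3.
  exact (continuous_minus (V := R_NormedModule) _ _ _ (C3_cont3 _ _ _ _ (HF t x y)) (C3_cont3 _ _ _ _ (HG t x y))). Qed.
Lemma Cont3_mult F G : Cont3 F -> Cont3 G -> Cont3 (fun t x y => F t x y * G t x y).
Proof. intros HF HG t x y. apply cont3_C3.
  exact (continuous_mult (K := R_AbsRing) _ _ _ (C3_cont3 _ _ _ _ (HF t x y)) (C3_cont3 _ _ _ _ (HG t x y))). Qed.
Lemma Cont3_const c : Cont3 (fun _ _ _ => c).
Proof. intros t x y e He. exists 1; split; [lra|]. intros. rewrite Rminus_diag, Rabs_R0; auto. Qed.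
Lemma Cont3_y : Cont3 (fun _ _ y => y).
Proof. intros t x y e He. exists e; split; auto. Qed.
Lemma Cont3_sm F : smooth3 F -> Cont3 F.
Proof. intros H t x y. apply smooth3_C3, H. Qed.

Lemma Cont3_cont F t y : Cont3 F -> forall x, continuous (fun s => F t s y) x.
Proof. intros H x. apply C3_cont_1, H. Qed.

Lemma avgG_C2 H t y : Cont3 H -> C2 (avgz H) t y.
Proof.
  intros Hc. unfold avgz, avg. apply C2_mult. apply C2_const.
  apply (param_cont (fun x p q => H p x q)). intros. apply C3_perm, Hc.
Qed.

Lemma avgG_dy H t y : Cont3 H -> (forall t x y, ex_derive (fun s => H t x s) y) -> Cont3 (d_2 H) ->
  is_derive (fun s => avgz H t s) y (avgz (d_2 H) t y).
Proof.
  intros Hc Hd Hc2. unfold avgz, avg. apply is_derive_scal.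
  apply (param_deriv (fun u x => H t x u)).
  - intros. apply Hd.
  - intros. apply (C2_swap (fun v u => d_2 H t v u)). apply C3_C2_12, Hc2.
  - intros. apply exR. apply Cont3_cont, Hc.
Qed.

Lemma avgG_dt H t y : Cont3 H -> (forall t x y, ex_derive (fun s => H s x y) t) -> Cont3 (d_t H) ->
  is_derive (fun s => avgz H s y) t (avgz (d_t H) t y).
Proof.
  intros Hc Hd Hc2. unfold avgz, avg. apply is_derive_scal.
  apply (param_deriv (fun u x => H u x y)).
  - intros. apply Hd.
  - intros. exact (C3_C2_01 (d_t H) u x y (Hc2 u x y)).
  - intros. apply exR. apply Cont3_cont, Hc.
Qed.

Lemma avgG_d1_zero H t y : (forall t x y, ex_derive (fun s => H t s y) x) -> Cont3 (d_1 H) ->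
  periodic3 H -> avgz (d_1 H) t y = 0.
Proof.
  intros Hd Hc Hp. unfold avgz, avg, d_1.
  rewrite (RInt_Derive (fun s => H t s y)).
  - replace (2 * PI) with (0 + 2 * PI) by ring. rewrite Hp. ring.
  - intros. apply Hd.
  - intros. apply (C3_cont_1 (d_1 H)), Hc.
Qed.

Lemma d2_mult F G t x y : ex_derive (fun s => F t x s) y -> ex_derive (fun s => G t x s) y ->
  d_2 (fun t x y => F t x y * G t x y) t x y = d_2 F t x y * G t x y + F t x y * d_2 G t x y.
Proof. intros H1 H2. unfold d_2. exact (Derive_mult (fun s => F t x s) (fun s => G t x s) y H1 H2). Qed.
Lemma d1_mult F G t x y : ex_derive (fun s => F t s y) x -> ex_derive (fun s => G t s y) x ->
  d_1 (fun t x y => F t x y * G t x y) t x y = d_1 F t x y * G t x y + F t x y * d_1 G t x y.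
Proof. intros H1 H2. unfold d_1. exact (Derive_mult (fun s => F t s y) (fun s => G t s y) x H1 H2). Qed.

Lemma isd_mult (f g : R -> R) x df dg : is_derive f x df -> is_derive g x dg ->
  is_derive (fun y => f y * g y) x (df * g x + f x * dg).
Proof. intros Hf Hg. exact (is_derive_mult (K := R_AbsRing) f g x df dg Hf Hg Rmult_comm). Qed.
Lemma isd_plus (f g : R -> R) x df dg : is_derive f x df -> is_derive g x dg ->
  is_derive (fun y => f y + g y) x (df + dg).
Proof. intros Hf Hg. exact (is_derive_plus (K := R_AbsRing) (V := R_NormedModule) f g x df dg Hf Hg). Qed.
Lemma isd_minus (f g : R -> R) x df dg : is_derive f x df -> is_derive g x dg ->
  is_derive (fun y => f y - g y) x (df - dg).
Proof. intros Hf Hg. exact (is_derive_minus (K := R_AbsRing) (V := R_NormedModule) f g x df dg Hf Hg). Qed.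
Lemma isd_const (c : R) x : is_derive (fun _ => c) x 0.
Proof. exact (is_derive_const (K := R_AbsRing) (V := R_NormedModule) c x). Qed.
Lemma isd_id x : is_derive (fun y : R => y) x 1.
Proof. exact (is_derive_id (K := R_AbsRing) x). Qed.
Lemma isd_ext (f g : R -> R) (x l l' : R) : (forall y, f y = g y) -> l = l' -> is_derive f x l -> is_derive g x l'.
Proof. intros E E' H. subst l'. exact (is_derive_ext f g x l E H). Qed.

Lemma isd_d1 F t x y : smooth3 F -> is_derive (fun s : R => F t s y) x (d_1 F t x y).
Proof. intros H. apply Derive_correct. exact (proj1 (proj2 (smooth3_ex F t x y H))). Qed.
Lemma isd_d2 F t x y : smooth3 F -> is_derive (fun s : R => F t x s) y (d_2 F t x y).
Proof. intros H. apply Derive_correct. exact (proj2 (proj2 (smooth3_ex F t x y H))). Qed.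
Lemma isd_dt F t x y : smooth3 F -> is_derive (fun s : R => F s x y) t (d_t F t x y).
Proof. intros H. apply Derive_correct. exact (proj1 (smooth3_ex F t x y H)). Qed.

Lemma Dun (f : R -> R) x l : is_derive f x l -> Derive f x = l.
Proof. apply is_derive_unique. Qed.

Lemma exd2 F t x y : smooth3 F -> ex_derive (fun s => F t x s) y.
Proof. intros H. exact (proj2 (proj2 (smooth3_ex F t x y H))). Qed.
Lemma exd1 F t x y : smooth3 F -> ex_derive (fun s => F t s y) x.
Proof. intros H. exact (proj1 (proj2 (smooth3_ex F t x y H))). Qed.
Lemma exdt F t x y : smooth3 F -> ex_derive (fun s => F s x y) t.
Proof. intros H. exact (proj1 (smooth3_ex F t x y H)). Qed.

Lemma Cont3_ext F G : (forall t x y, F t x y = G t x y) -> Cont3 F -> Cont3 G.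
Proof. intros E H t x y e He. destruct (H t x y e He) as [d [Hd H']]. exists d; split; auto.
  intros. rewrite <- !E. auto. Qed.

Ltac sm := repeat match goal with
  | |- smooth3 (d_1 ?F) => apply (smooth3_d1 F)
  | |- smooth3 (d_2 ?F) => apply (smooth3_d2 F)
  | |- smooth3 (d_t ?F) => apply (smooth3_dt F) end; assumption.
Ltac c3 := repeat (cbv beta; match goal with
 | |- Cont3 (fun t x y => _ + _) => apply Cont3_plus
 | |- Cont3 (fun t x y => _ - _) => apply Cont3_minus
 | |- Cont3 (fun t x y => _ * _) => apply Cont3_mult
 | |- Cont3 (fun t x y => y) => apply Cont3_y
 | |- Cont3 (fun t x y => ?c) => apply Cont3_const
 | |- Cont3 (fun t x y => ?F t x y) => apply (Cont3_sm F); solve [sm]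
 | |- Cont3 ?F => apply (Cont3_sm F); solve [sm]
 end).

Ltac cc := repeat (cbv beta; match goal with
 | |- forall _, _ => intro
 | |- continuous (fun s => _ + _) _ => apply cplus
 | |- continuous (fun s => _ - _) _ => apply cminus
 | |- continuous (fun s => _ * _) _ => apply cmult
 | |- continuous (fun s => ?c) _ => apply cconst
 | |- continuous (fun s => s) _ => apply cid
 | |- continuous (fun s => ?F ?t s ?y) _ => apply (sm_cont F t y); solve [sm]
 end).

Lemma avg_prod_dy F G t y : smooth3 F -> smooth3 G ->
  is_derive (fun s => avgz (fun t x y => F t x y * G t x y) t s) y
    (avgz (fun t x y => d_2 F t x y * G t x y + F t x y * d_2 G t x y) t y).
Proof.
  intros HF HG.
  assert (E : forall t x y, d_2 (fun t x y => F t x y * G t x y) t x y =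
     d_2 F t x y * G t x y + F t x y * d_2 G t x y).
  { intros. apply d2_mult; apply exd2; auto. }
  eapply isd_ext; [intros; reflexivity| |].
  2: { apply avgG_dy.
       - apply Cont3_mult; apply Cont3_sm; auto.
       - intros. apply ex_derive_mult; apply exd2; auto.
       - eapply Cont3_ext. intros; symmetry; apply E.
         apply Cont3_plus; apply Cont3_mult; apply Cont3_sm; auto; apply smooth3_d2; auto. }
  unfold avgz. apply avg_ext. intros; apply E.
Qed.

Lemma avg_prod_C2 F G t y : smooth3 F -> smooth3 G -> C2 (avgz (fun t x y => F t x y * G t x y)) t y.
Proof. intros. apply avgG_C2. apply Cont3_mult; apply Cont3_sm; auto. Qed.

Lemma const_deriv0 (f : R -> R) a b : a <= b -> (forall x, a < x < b -> is_derive f x 0) ->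
  (forall x, a <= x <= b -> continuous f x) -> f b = f a.
Proof.
  intros Hab Hd Hc. destruct (MVT_gen f a b (fun _ => 0)) as [c [Hc1 Hc2]].
  - rewrite Rmin_left, Rmax_right by lra. auto.
  - rewrite Rmin_left, Rmax_right by lra. intros. apply continuity_pt_filterlim, Hc; auto.
  - lra.
Qed.

Lemma quot_bound a a0 b b0 : / 2 <= b -> / 2 <= b0 ->
  Rabs (a0 / b0 - a / b) <= 2 * Rabs (a0 - a) + 4 * Rabs a0 * Rabs (b - b0).
Proof.
  intros Hb Hb0.
  replace (a0 / b0 - a / b) with ((a0 - a) * / b + a0 * (b - b0) * (/ b * / b0)) by (field; lra).
  eapply Rle_trans. apply Rabs_triang. rewrite !Rabs_mult.
  rewrite (Rabs_right (/ b)) by (left; apply Rinv_0_lt_compat; lra).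
  rewrite (Rabs_right (/ b0)) by (left; apply Rinv_0_lt_compat; lra).
  assert (I1 : / b <= 2). { rewrite <- (Rinv_inv 2). apply Rinv_le_contravar; lra. }
  assert (I2 : / b0 <= 2). { rewrite <- (Rinv_inv 2). apply Rinv_le_contravar; lra. }
  assert (P1 : 0 < / b) by (apply Rinv_0_lt_compat; lra).
  assert (P2 : 0 < / b0) by (apply Rinv_0_lt_compat; lra).
  pose proof (Rabs_pos (a0 - a)). pose proof (Rabs_pos a0). pose proof (Rabs_pos (b - b0)).
  apply Rplus_le_compat.
  - rewrite Rmult_comm. apply Rmult_le_compat_r; lra.
  - assert (X : / b * / b0 <= 4). { replace 4 with (2 * 2) by ring. apply Rmult_le_compat; lra. }
    replace (4 * Rabs a0 * Rabs (b - b0)) with (Rabs a0 * Rabs (b - b0) * 4) by ring.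
    apply Rmult_le_compat_l. apply Rmult_le_pos; auto. exact X.
Qed.

Lemma C2_opp G a b : C2 G a b -> C2 (fun a b => - G a b) a b.
Proof. intros H. apply C2_of_2d, continuity_2d_pt_opp; apply C2_2d; auto. Qed.

Lemma C2_ext_loc G G' a b : (exists d, 0 < d /\ forall a' b', Rabs (a' - a) < d -> Rabs (b' - b) < d ->
  G a' b' = G' a' b') -> C2 G a b -> C2 G' a b.
Proof.
  intros [d [Hd E]] H e He. destruct (H e He) as [d' [Hd' H']]. exists (Rmin d d'); split.
  apply Rmin_glb_lt; auto. intros a' b' H1 H2.
  assert (Rmin d d' <= d) by apply Rmin_l. assert (Rmin d d' <= d') by apply Rmin_r.
  rewrite <- !E; try lra. apply H'; lra. rewrite Rminus_diag, Rabs_R0; lra. rewrite Rminus_diag, Rabs_R0; lra.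
Qed.

Lemma loc_of (P : R -> Prop) x d : 0 < d -> (forall y, Rabs (y - x) < d -> P y) -> locally x P.
Proof. intros Hd H. exists (mkposreal d Hd). intros y Hy. apply H. exact Hy. Qed.

Lemma isd_comp (f g : R -> R) x df dg : is_derive f (g x) df -> is_derive g x dg ->
  is_derive (fun y => f (g y)) x (df * dg).
Proof. intros Hf Hg. pose proof (is_derive_comp f g x df dg Hf Hg) as H.
  eapply isd_ext; [intros; reflexivity| |exact H]. unfold scal; simpl; unfold mult; simpl. ring. Qed.

Lemma isd_loc (f g : R -> R) x l d : 0 < d -> (forall y, Rabs (y - x) < d -> f y = g y) ->
  is_derive f x l -> is_derive g x l.
Proof. intros Hd E H. apply (is_derive_ext_loc f g x l); auto. apply (loc_of _ x d); auto. Qed.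

Section Main.
Variables (theta0 T : R) (omega psi : R -> R -> R -> R).
Hypothesis Hth : 0 < theta0.
Hypothesis Hth8 : theta0 <= / 8.
Hypothesis HT : 0 < T.
Hypothesis Hom : smooth3 omega.
Hypothesis Hps : smooth3 psi.
Hypothesis Hpo : forall t x y, omega t (x + 2 * PI) y = omega t x y.
Hypothesis Hpp : forall t x y, psi t (x + 2 * PI) y = psi t x y.
Hypothesis Htr : forall t x y, 0 <= t <= T -> 0 <= y <= 1 ->
       d_t omega t x y + y * d_1 omega t x y
       + ux psi t x y * d_1 omega t x y + d_1 psi t x y * d_2 omega t x y = 0.
Hypothesis Hlap : forall t x y, 0 <= t <= T -> 0 <= y <= 1 ->
       d_1 (d_1 psi) t x y + d_2 (d_2 psi) t x y = omega t x y.
Hypothesis Hbc : forall t x, 0 <= t <= T -> psi t x 0 = 0 /\ psi t x 1 = 0.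
Hypothesis Hmean : forall t, 0 <= t <= T ->
       RInt (fun x => RInt (fun y => omega t x y) 0 1) 0 (2 * PI) = 0.
Hypothesis Hsupp : forall t x y, 0 <= t <= T -> 0 <= y <= 1 -> (y < theta0 \/ 1 - theta0 < y) ->
       omega t x y = 0.
Hypothesis Hsmall : forall t, 0 <= t <= T -> H10norm (fun y => avgz omega t y) < / 2.

Definition W := avgz omega.
Definition A := avgz (ux psi).
Definition A2 := avgz (d_2 psi).
Definition B := avgz (d_2 (d_2 psi)).

Let Hps2 := smooth3_d2 _ Hps.
Let Hps22 := smooth3_d2 _ Hps2.
Let Hps1 := smooth3_d1 _ Hps.
Let Hps11 := smooth3_d1 _ Hps1.

Lemma A_A2 t y : A t y = - A2 t y.
Proof. unfold A, A2, avgz, ux. apply avg_opp. apply sm_cont, Hps2. Qed.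

Lemma dA2 t y : is_derive (fun s => A2 t s) y (B t y).
Proof. apply avg_dy, Hps2. Qed.

Lemma dA t y : is_derive (fun s => A t s) y (- B t y).
Proof.
  assert (E : forall s, -1 * A2 t s = A t s) by (intros; rewrite A_A2; ring).
  apply (is_derive_ext _ _ _ _ E).
  replace (- B t y) with (-1 * B t y) by ring. apply is_derive_scal, dA2.
Qed.

Lemma B_W t y : 0 <= t <= T -> 0 <= y <= 1 -> B t y = W t y.
Proof.
  intros Ht Hy. unfold B, W, avgz.
  rewrite (avg_ext _ (fun x => omega t x y - d_1 (d_1 psi) t x y)).
  2: { intros. rewrite <- (Hlap t x y) by auto. ring. }
  rewrite avg_minus by (apply sm_cont; auto).
  pose proof (avg_d1_zero (d_1 psi) t y Hps1 (periodic_d1 _ Hps Hpp)) as E. unfold avgz in E.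
  rewrite E. ring.
Qed.

Lemma W_supp t y : 0 <= t <= T -> 0 <= y <= 1 -> (y < theta0 \/ 1 - theta0 < y) -> W t y = 0.
Proof.
  intros. unfold W, avgz. rewrite (avg_ext _ (fun _ => 0)). apply avg_const.
  intros; apply Hsupp; auto.
Qed.


Lemma smooth_iter k : smooth3 (Nat.iter k d_2 omega).
Proof. induction k; simpl; auto. apply smooth3_d2; auto. Qed.

Lemma Dn_avg k t y : Derive_n (fun y => avgz omega t y) k y = avgz (Nat.iter k d_2 omega) t y.
Proof.
  revert y. induction k; intros y. reflexivity.
  simpl Derive_n. rewrite (Derive_ext _ (fun y => avgz (Nat.iter k d_2 omega) t y)) by auto.
  apply is_derive_unique. apply avg_dy, smooth_iter.
Qed.

Lemma W_small t y : 0 <= t <= T -> 0 <= y <= 1 -> Rabs (W t y) <= / 2.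
Proof.
  intros Ht Hy.
  set (f := fun k => RInt (fun y => (Derive_n (fun y => avgz omega t y) k y) ^ 2) 0 1).
  assert (Hf : forall k, 0 <= f k).
  { intros k. unfold f. apply RInt_ge_0. lra.
    - apply exR. intros x. apply (continuous_ext (fun y => (avgz (Nat.iter k d_2 omega) t y) ^ 2)).
      intros; rewrite Dn_avg; auto. simpl. apply cmult. apply avgC2_cont_y, smooth_iter.
      apply cmult. apply avgC2_cont_y, smooth_iter. apply cconst.
    - intros. apply pow2_ge_0. }
  pose proof (Hsmall t Ht) as Hs. unfold H10norm in Hs. fold f in Hs.
  pose proof (sum_f_R0_ge1 f 10 Hf ltac:(lia)) as H1.
  pose proof (Hf 1%nat) as H0.
  assert (Hf1 : f 1%nat < / 4).
  { pose proof (sqrt_sqrt (sum_f_R0 f 10) ltac:(lra)). pose proof (sqrt_pos (sum_f_R0 f 10)). nra. }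
  set (g := fun y => avgz (d_2 omega) t y).
  assert (Hg : forall y, continuous g y) by (intros; apply avgC2_cont_y, smooth3_d2, Hom).
  assert (Dg : forall y, Derive (fun s => W t s) y = g y).
  { intros. apply is_derive_unique. apply avg_dy, Hom. }
  assert (E : W t y = RInt g 0 y).
  { rewrite <- (RInt_ext' (Derive (fun s => W t s))) by (intros; apply Dg).
    rewrite RInt_Derive. rewrite (W_supp t 0); auto; try lra.
    intros. eexists; apply avg_dy, Hom.
    intros. apply (continuous_ext g). intros; rewrite Dg; auto. apply Hg. }
  assert (E1 : f 1%nat = RInt (fun y => (g y) ^ 2) 0 1).
  { unfold f. apply RInt_ext'. intros. simpl Derive_n. rewrite Dg. reflexivity. }
  rewrite E.
  assert (Ha : forall x, continuous (fun y => Rabs (g y)) x).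
  { intros. apply (continuous_comp g Rabs). apply Hg. apply continuous_Rabs. }
  eapply Rle_trans. apply abs_RInt_le. lra. apply exR; auto.
  apply Rle_trans with (RInt (fun y => Rabs (g y)) 0 1).
  { rewrite <- (RInt_Chasles' _ 0 y 1) by (apply exR; auto).
    assert (0 <= RInt (fun y => Rabs (g y)) y 1). apply RInt_ge_0. lra. apply exR; auto.
    intros; apply Rabs_pos. lra. }
  apply Rle_trans with (RInt (fun y => (g y) ^ 2 + / 4) 0 1).
  { apply RInt_le. lra. apply exR; auto. apply exR. intros. apply cplus. simpl.
    apply cmult; auto. apply cmult; auto. apply cconst. apply cconst.
    intros. pose proof (Rabs_pos (g x)). pose proof (pow2_abs (g x)).
    assert (0 <= (Rabs (g x) - /2)^2) by apply pow2_ge_0. nra. }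
  rewrite RInt_plus'. rewrite RInt_const'. rewrite <- E1. lra.
  apply exR. intros. simpl. apply cmult; auto. apply cmult; auto. apply cconst.
  apply exR. intros. apply cconst.
Qed.


Lemma C3_om_sw t p s : C3 (fun s p q => omega t p s) s p 0.
Proof. intros e He. destruct (smooth3_C3 omega t p s Hom e He) as [d [Hd H]].
  exists d; split; auto. intros a' b' c' H1 H2 H3. apply H; auto. rewrite Rminus_diag, Rabs_R0; auto. Qed.

Lemma W_int0 t : 0 <= t <= T -> RInt (fun y => W t y) 0 1 = 0.
Proof.
  intros Ht.
  set (K := fun u => RInt (fun x => RInt (fun s => omega t x s) 0 u) 0 (2 * PI)).
  set (Om := fun u => RInt (fun x => omega t x u) 0 (2 * PI)).
  assert (C2o : forall tau y, C2 (fun tau y => omega t y tau) tau y).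
  { intros. apply (C2_swap (fun y tau => omega t y tau)). apply C3_C2_12, smooth3_C3, Hom. }
  assert (Dx : forall u x, is_derive (fun u => RInt (fun s => omega t x s) 0 u) u (omega t x u)).
  { intros. apply (IV_dt (fun tau y => omega t y tau)). auto. }
  assert (Cx : forall u x, continuous (fun x => RInt (fun s => omega t x s) 0 u) x).
  { intros. apply Ct1_continuous.
    apply (C2_C1_0 (fun p q => RInt (fun s => omega t p s) 0 u) x 0).
    apply (param_cont (fun s p q => omega t p s)). intros s' p' q'.
    intros e He. destruct (smooth3_C3 omega t p' s' Hom e He) as [d [Hd H]].
    exists d; split; auto. intros a' b' c' H1 H2 H3. apply H; auto. rewrite Rminus_diag, Rabs_R0; auto. }
  assert (DK : forall u, is_derive K u (Om u)).
  { intros u. unfold K, Om.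
    rewrite <- (RInt_ext' (fun x => Derive (fun u => RInt (fun s => omega t x s) 0 u) u)).
    2: { intros. apply is_derive_unique, Dx. }
    apply (param_deriv (fun u x => RInt (fun s => omega t x s) 0 u)).
    - intros. eexists; apply Dx.
    - intros. apply (C2_ext (fun u v => omega t v u)). intros; symmetry; apply is_derive_unique, Dx.
      apply C2o.
    - intros. apply exR. auto. }
  assert (COm : forall u, continuous Om u).
  { intros. apply Ct1_continuous. apply (C2_C1_0 (fun p q => RInt (fun x => omega t x p) 0 (2 * PI)) u 0).
    apply (param_cont (fun x p q => omega t x p)). intros x p q.
    intros e He. destruct (smooth3_C3 omega t x p Hom e He) as [d [Hd H]].
    exists d; split; auto. intros a' b' c' H1 H2 H3. apply H; auto. rewrite Rminus_diag, Rabs_R0; auto. }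
  assert (E : RInt (Derive K) 0 1 = K 1 - K 0).
  { apply RInt_Derive. intros; eexists; apply DK. intros.
    apply (continuous_ext Om). intros; symmetry; apply is_derive_unique, DK. apply COm. }
  assert (K1 : K 1 = 0) by (apply Hmean; auto).
  assert (K0 : K 0 = 0).
  { unfold K. rewrite (RInt_ext' _ (fun _ => 0)). rewrite RInt_const'. apply Rmult_0_r.
    intros. apply (RInt_point (V := R_CompleteNormedModule)). }
  rewrite (RInt_ext' _ (fun y => / (2 * PI) * Derive K y)).
  rewrite RInt_scal'. rewrite E, K1, K0. unfold Rminus; rewrite Rplus_opp_r; apply Rmult_0_r.
  apply exR. intros. apply (continuous_ext Om). intros; symmetry; apply is_derive_unique, DK. apply COm.
  intros. rewrite (is_derive_unique _ _ _ (DK x)). unfold W, avgz, avg, Om. reflexivity.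
Qed.


Definition Ps := avgz psi.

Lemma dPs t y : is_derive (fun s => Ps t s) y (A2 t y).
Proof. apply avg_dy, Hps. Qed.

Lemma Ps01 t : 0 <= t <= T -> Ps t 0 = 0 /\ Ps t 1 = 0.
Proof.
  intros Ht. unfold Ps, avgz. split; rewrite (avg_ext _ (fun _ => 0)); try apply avg_const;
  intros; apply Hbc; auto.
Qed.

Lemma contA t y : continuous (fun s => A t s) y.
Proof. apply (continuous_ext (fun s => - A2 t s)). intros; rewrite A_A2; auto.
  apply (continuous_opp (V := R_NormedModule)). apply avgC2_cont_y, Hps2. Qed.
Lemma contB t y : continuous (fun s => B t s) y.
Proof. apply avgC2_cont_y, Hps22. Qed.
Lemma contW t y : continuous (fun s => W t s) y.
Proof. apply avgC2_cont_y, Hom. Qed.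

Lemma A_int0 t : 0 <= t <= T -> RInt (fun y => A t y) 0 1 = 0.
Proof.
  intros Ht. rewrite (RInt_ext' _ (fun y => -1 * Derive (fun s => Ps t s) y)).
  2: { intros. rewrite (Dun (fun s => Ps t s) x _ (dPs t x)). rewrite A_A2. ring. }
  rewrite RInt_scal'. rewrite RInt_Derive. destruct (Ps01 t Ht) as [-> ->]. rring.
  intros; eexists; apply dPs.
  intros. apply (continuous_ext (fun s => A2 t s)). intros; symmetry; apply is_derive_unique, dPs.
  apply avgC2_cont_y, Hps2.
  apply exR. intros. apply (continuous_ext (fun s => A2 t s)). intros; symmetry; apply is_derive_unique, dPs.
  apply avgC2_cont_y, Hps2.
Qed.

Definition Cc t := RInt (fun y => (1 - y) * W t y) 0 1.

Lemma A0_C t : 0 <= t <= T -> A t 0 = Cc t.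
Proof.
  intros Ht.
  set (k := fun y => (y - 1) * A t y).
  assert (Dk : forall y, is_derive k y (A t y - (y - 1) * B t y)).
  { intros y. unfold k. eapply isd_ext; [intros; reflexivity| |].
    2: { apply isd_mult. apply isd_minus. apply isd_id. apply isd_const. apply dA. }
    cbv beta. ring. }
  assert (Ck : forall y, continuous (fun y => A t y - (y - 1) * B t y) y).
  { intros. apply cminus. apply contA. apply cmult. apply cminus. apply cid. apply cconst. apply contB. }
  assert (E : RInt (Derive k) 0 1 = k 1 - k 0).
  { apply RInt_Derive. intros; eexists; apply Dk. intros.
    apply (continuous_ext (fun y => A t y - (y - 1) * B t y)). intros; symmetry; apply is_derive_unique, Dk.
    apply Ck. }
  rewrite (RInt_ext' _ (fun y => A t y + (1 - y) * W t y)) in E.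
  2: { intros y Hy. rewrite Rmin_left, Rmax_right in Hy by lra. rewrite (Dun k y _ (Dk y)).
       rewrite B_W by (auto; lra). ring. }
  rewrite RInt_plus' in E. rewrite A_int0 in E by auto. unfold k in E. unfold Cc.
  replace (1 - 1) with 0 in E by ring. lra.
  apply exR; apply contA.
  apply exR; intros; apply cmult. apply cminus. apply cconst. apply cid. apply contW.
Qed.


Lemma schw t x y : d_1 (d_2 psi) t x y = d_2 (d_1 psi) t x y.
Proof.
  unfold d_1, d_2. apply (Schwarz (fun u v => psi t u v) x y).
  - exists (mkposreal 1 Rlt_0_1). intros u v _ _. split; [|split; [|split]].
    + apply exd1; auto. + apply exd2; auto.
    + exact (exd1 (d_2 psi) t u v Hps2). + exact (exd2 (d_1 psi) t u v Hps1).
  - apply C2_2d. exact (C3_C2_12 (d_1 (d_2 psi)) t x y (smooth3_C3 _ _ _ _ (smooth3_d1 _ Hps2))).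
  - apply C2_2d. exact (C3_C2_12 (d_2 (d_1 psi)) t x y (smooth3_C3 _ _ _ _ (smooth3_d2 _ Hps1))).
Qed.

Lemma d1psi_bc t x : 0 <= t <= T -> d_1 psi t x 0 = 0 /\ d_1 psi t x 1 = 0.
Proof.
  intros Ht. unfold d_1. split.
  - rewrite (Derive_ext _ (fun _ => 0)). apply Derive_const. intros; apply Hbc; auto.
  - rewrite (Derive_ext _ (fun _ => 0)). apply Derive_const. intros; apply Hbc; auto.
Qed.

Definition Q := avgz (fun t x y => d_1 psi t x y * omega t x y).
Definition DQ := avgz (fun t x y => d_2 (d_1 psi) t x y * omega t x y + d_1 psi t x y * d_2 omega t x y).

Lemma dQ t y : is_derive (fun s => Q t s) y (DQ t y).
Proof. apply avg_prod_dy; auto. Qed.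

Lemma contDQ t y : continuous (fun s => DQ t s) y.
Proof. unfold DQ. apply Ct1_continuous, C2_C1_1, avgG_C2. c3. Qed.
Lemma contQ t y : continuous (fun s => Q t s) y.
Proof. apply Ct1_continuous, C2_C1_1, avg_prod_C2; auto. Qed.

Lemma Wt_DQ t y : 0 <= t <= T -> 0 <= y <= 1 -> avgz (d_t omega) t y = - DQ t y.
Proof.
  intros Ht Hy.
  set (G1 := fun t x y => (d_2 psi t x y - y) * omega t x y).
  assert (exG1 : forall t x y, ex_derive (fun s => G1 t s y) x).
  { intros. unfold G1. apply ex_derive_mult. apply (ex_derive_minus (K := R_AbsRing) (V := R_NormedModule)).
    apply exd1; auto. apply ex_derive_const. apply exd1; auto. }
  assert (dG1 : forall t x y, d_1 G1 t x y = d_1 (d_2 psi) t x y * omega t x y + (d_2 psi t x y - y) * d_1 omega t x y).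
  { intros. apply Dun. eapply isd_ext; [intros; reflexivity| |].
    2: { apply isd_mult. apply isd_minus. apply isd_d1; auto. apply isd_const.
         apply isd_d1; auto. }
    cbv beta. ring. }
  assert (Z : avgz (d_1 G1) t y = 0).
  { apply avgG_d1_zero; auto.
    - eapply Cont3_ext. intros; symmetry; apply dG1. c3.
    - intros t' x' y'. unfold G1. rewrite Hpo. rewrite (periodic_d2 psi Hpp). reflexivity. }
  unfold DQ. unfold avgz in *.
  rewrite (avg_ext _ (fun x => d_1 G1 t x y -
     (d_2 (d_1 psi) t x y * omega t x y + d_1 psi t x y * d_2 omega t x y))).
  2: { intros x. rewrite dG1. rewrite schw. pose proof (Htr t x y Ht Hy) as Tr. unfold ux in Tr. lra. }
  rewrite avg_minus. rewrite Z. ring.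
  - intros x. apply (continuous_ext (fun x => d_1 (d_2 psi) t x y * omega t x y + (d_2 psi t x y - y) * d_1 omega t x y)).
    intros; symmetry; apply dG1. cc.
  - cc.
Qed.

Definition Rr := avgz (fun t x y => d_1 psi t x y * d_2 psi t x y).
Definition DR := avgz (fun t x y => d_2 (d_1 psi) t x y * d_2 psi t x y + d_1 psi t x y * d_2 (d_2 psi) t x y).

Lemma Q_DR t y : 0 <= t <= T -> 0 <= y <= 1 -> Q t y = DR t y.
Proof.
  intros Ht Hy.
  set (G2 := fun t x y => / 2 * (d_1 psi t x y * d_1 psi t x y) - / 2 * (d_2 psi t x y * d_2 psi t x y)).
  assert (exG2 : forall t x y, ex_derive (fun s => G2 t s y) x).
  { intros. eexists. unfold G2. apply isd_minus; apply is_derive_scal; apply isd_mult;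
    apply Derive_correct, exd1; auto. }
  assert (dG2 : forall t x y, d_1 G2 t x y = d_1 psi t x y * d_1 (d_1 psi) t x y - d_2 psi t x y * d_1 (d_2 psi) t x y).
  { intros. apply Dun. eapply isd_ext; [intros; reflexivity| |].
    2: { apply isd_minus; apply is_derive_scal; apply isd_mult; apply isd_d1; auto. }
    cbv beta. field. }
  assert (Z : avgz (d_1 G2) t y = 0).
  { apply avgG_d1_zero; auto.
    - eapply Cont3_ext. intros; symmetry; apply dG2. c3.
    - intros t' x' y'. unfold G2. rewrite !(periodic_d1 psi Hps Hpp), !(periodic_d2 psi Hpp). reflexivity. }
  unfold Q, DR. unfold avgz in *.
  rewrite (avg_ext (fun x => d_1 psi t x y * omega t x y) (fun x => d_1 G2 t x y +
     (d_2 (d_1 psi) t x y * d_2 psi t x y + d_1 psi t x y * d_2 (d_2 psi) t x y))).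
  2: { intros x. rewrite dG2. rewrite schw. rewrite <- (Hlap t x y Ht Hy). ring. }
  rewrite avg_plus. rewrite Z. ring.
  - intros x. apply (continuous_ext (fun x => d_1 psi t x y * d_1 (d_1 psi) t x y - d_2 psi t x y * d_1 (d_2 psi) t x y)).
    intros; symmetry; apply dG2. cc.
  - cc.
Qed.

Lemma dRr t y : is_derive (fun s => Rr t s) y (DR t y).
Proof. apply avg_prod_dy; auto. Qed.

Lemma Q_int0 t : 0 <= t <= T -> RInt (fun y => Q t y) 0 1 = 0.
Proof.
  intros Ht. rewrite (RInt_ext' _ (Derive (fun s => Rr t s))).
  2: { intros y Hy. rewrite Rmin_left, Rmax_right in Hy by lra.
       rewrite (Dun (fun s => Rr t s) y _ (dRr t y)). apply Q_DR; auto; lra. }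
  rewrite RInt_Derive.
  - unfold Rr, avgz.
    rewrite (avg_ext (fun z => d_1 psi t z 1 * d_2 psi t z 1) (fun _ => 0)).
    rewrite (avg_ext (fun z => d_1 psi t z 0 * d_2 psi t z 0) (fun _ => 0)).
    rewrite avg_const. rring.
    intros; rewrite (proj1 (d1psi_bc t x Ht)); ring.
    intros; rewrite (proj2 (d1psi_bc t x Ht)); ring.
  - intros; eexists; apply dRr.
  - intros. apply (continuous_ext (fun s => DR t s)). intros; symmetry; apply Dun, dRr.
    unfold DR. apply Ct1_continuous, C2_C1_1, avgG_C2. c3.
Qed.

Lemma Q0 t : 0 <= t <= T -> Q t 0 = 0.
Proof. intros Ht. unfold Q, avgz. rewrite (avg_ext _ (fun _ => 0)). apply avg_const.
  intros; rewrite (proj1 (d1psi_bc t x Ht)); ring. Qed.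

Lemma dCc t : is_derive Cc t (RInt (fun y => (1 - y) * avgz (d_t omega) t y) 0 1).
Proof.
  unfold Cc.
  rewrite <- (RInt_ext' (fun y => Derive (fun u => (1 - y) * W u y) t)).
  2: { intros. apply Dun. apply is_derive_scal, avg_dt, Hom. }
  apply (param_deriv (fun u y => (1 - y) * W u y)).
  - intros. eexists. apply is_derive_scal, avg_dt, Hom.
  - intros. apply (C2_ext (fun u v => (1 - v) * avgz (d_t omega) u v)).
    intros; symmetry; apply Dun. apply is_derive_scal, avg_dt, Hom.
    apply C2_mult. apply C2_minus. apply C2_const. apply C2_id2. apply avg_C2, smooth3_dt, Hom.
  - intros. apply exR. intros. apply cmult. apply cminus. apply cconst. apply cid. apply contW.
Qed.

Lemma dCc0 t : 0 <= t <= T -> is_derive Cc t 0.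
Proof.
  intros Ht. eapply isd_ext; [intros; reflexivity| |apply dCc].
  rewrite (RInt_ext' _ (fun y => -1 * ((1 - y) * DQ t y))).
  2: { intros y Hy. rewrite Rmin_left, Rmax_right in Hy by lra. rewrite Wt_DQ by (auto; lra). ring. }
  rewrite RInt_scal'.
  2: { apply exR. intros. apply cmult. apply cminus. apply cconst. apply cid. apply contDQ. }
  set (m := fun y => (1 - y) * Q t y).
  assert (Dm : forall y, is_derive m y (- Q t y + (1 - y) * DQ t y)).
  { intros. unfold m. eapply isd_ext; [intros; reflexivity| |].
    2: { apply isd_mult. apply isd_minus. apply isd_const. apply isd_id. apply dQ. }
    cbv beta. ring. }
  assert (Cm : forall y, continuous (fun y => - Q t y + (1 - y) * DQ t y) y).
  { intros. apply cplus. apply (continuous_opp (V := R_NormedModule)). apply contQ.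
    apply cmult. apply cminus. apply cconst. apply cid. apply contDQ. }
  assert (E : RInt (Derive m) 0 1 = m 1 - m 0).
  { apply RInt_Derive. intros; eexists; apply Dm. intros.
    apply (continuous_ext (fun y => - Q t y + (1 - y) * DQ t y)). intros; symmetry; apply Dun, Dm.
    apply Cm. }
  rewrite (RInt_ext' _ (fun y => -1 * Q t y + (1 - y) * DQ t y)) in E.
  2: { intros. rewrite (Dun m x _ (Dm x)). ring. }
  rewrite RInt_plus' in E. rewrite RInt_scal' in E. rewrite Q_int0 in E by auto.
  unfold m in E. rewrite Q0 in E by auto.
  set (X := RInt (fun y => (1 - y) * DQ t y) 0 1) in *.
  assert (E' : (-1 * 0 + X : R) = (1 - 1) * Q t 1 - (1 - 0) * 0) by exact E.
  match goal with |- ?a = ?b => change (@eq R a b) end. lra.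
  apply exR; apply contQ.
  apply exR; intros. apply cmult. apply (continuous_opp (V := R_NormedModule)) with (f := fun _ => 1). apply cconst. apply contQ.
  apply exR; intros. apply cmult. apply cminus. apply cconst. apply cid. apply contDQ.
Qed.


Definition c0 := A 0 0.

Lemma At0 t : 0 <= t <= T -> A t 0 = c0.
Proof.
  intros Ht. unfold c0. rewrite !A0_C by lra.
  apply const_deriv0. lra. intros; apply dCc0; lra.
  intros. exact (ex_derive_continuous (K := R_AbsRing) (V := R_NormedModule) Cc x (ex_intro _ _ (dCc x))).
Qed.

Lemma A_strip t y : 0 <= t <= T -> (0 <= y <= theta0 \/ 1 - theta0 <= y <= 1) -> A t y = c0.
Proof.
  intros Ht Hy. rewrite <- (At0 t Ht).
  assert (Cont : forall y, continuous (fun s => A t s) y) by (intros; apply contA).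
  destruct Hy as [Hy|Hy].
  - apply const_deriv0. lra. intros x Hx.
    eapply isd_ext; [intros; reflexivity| |apply dA]. rewrite B_W by (auto; lra).
    rewrite W_supp by (auto; lra). ring. auto.
  - assert (E1 : A t 1 = A t y).
    { apply const_deriv0. lra. intros x Hx.
      eapply isd_ext; [intros; reflexivity| |apply dA]. rewrite B_W by (auto; lra).
      rewrite W_supp by (auto; lra). ring. auto. }
    rewrite <- E1.
    assert (E2 : RInt (Derive (fun s => A t s)) 0 1 = A t 1 - A t 0).
    { apply RInt_Derive. intros; eexists; apply dA. intros.
      apply (continuous_ext (fun s => - B t s)). intros; symmetry; apply Dun, dA.
      apply (continuous_opp (V := R_NormedModule)). apply contB. }
    rewrite (RInt_ext' _ (fun s => -1 * W t s)) in E2.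
    2: { intros x Hx. rewrite Rmin_left, Rmax_right in Hx by lra. rewrite (Dun (fun s => A t s) x _ (dA t x)).
         rewrite B_W by (auto; lra). ring. }
    rewrite RInt_scal' in E2. rewrite W_int0 in E2 by auto.
    assert (E3 : (-1 * 0 : R) = A t 1 - A t 0) by exact E2. lra.
    apply exR; apply contW.
Qed.


Lemma C2A t y : C2 A t y.
Proof. apply (C2_ext (fun t y => -1 * A2 t y)). intros; rewrite A_A2; ring.
  apply C2_mult. apply C2_const. apply avg_C2, Hps2. Qed.
Lemma C2B t y : C2 B t y.
Proof. apply avg_C2, Hps22. Qed.
Definition dB := avgz (d_2 (d_2 (d_2 psi))).
Lemma C2dB t y : C2 dB t y.
Proof. apply avg_C2. sm. Qed.
Lemma dB_is t y : is_derive (fun s => B t s) y (dB t y).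
Proof. apply avg_dy, Hps22. Qed.
Lemma C2W t y : C2 W t y.
Proof. apply avg_C2, Hom. Qed.

Definition IA t y := RInt (fun tau => A tau y) 0 t.
Definition IB t y := RInt (fun tau => B tau y) 0 t.
Definition IdB t y := RInt (fun tau => dB tau y) 0 t.

Lemma IA_dy t y : is_derive (fun s => IA t s) y (- IB t y).
Proof.
  eapply isd_ext; [intros; reflexivity| |].
  2: { apply (IV_dy A C2A). intros; eexists; apply dA.
       intros. apply (C2_ext (fun t y => -1 * B t y)). intros; symmetry. apply Dun. eapply isd_ext; [intros; reflexivity| |apply dA]. ring.
       apply C2_mult. apply C2_const. apply C2B. }
  unfold IB. rewrite (RInt_ext' _ (fun tau => -1 * B tau y)).
  rewrite RInt_scal'. rring. apply exRInt_C2, C2B.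
  intros. apply Dun. eapply isd_ext; [intros; reflexivity| |apply dA]. ring.
Qed.

Lemma IB_dy t y : is_derive (fun s => IB t s) y (IdB t y).
Proof.
  eapply isd_ext; [intros; reflexivity| |].
  2: { apply (IV_dy B C2B). intros; eexists; apply dB_is.
       intros. apply (C2_ext dB). intros a b; symmetry. apply (Dun (fun z => B a z) b _ (dB_is a b)).
       apply C2dB. }
  unfold IdB. apply RInt_ext'. intros. apply (Dun (fun z => B x z) y _ (dB_is x y)).
Qed.

Lemma IA_dt t y : is_derive (fun s => IA s y) t (A t y).
Proof. exact (IV_dt A C2A t y). Qed.
Lemma IB_dt t y : is_derive (fun s => IB s y) t (B t y).
Proof. exact (IV_dt B C2B t y). Qed.

Lemma vmap_eq t y : vmap psi t y = y + / t * IA t y.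
Proof. reflexivity. Qed.

Definition g1 t y := 1 - / t * IB t y.
Definition g2 t y := - / (t * t) * IA t y + / t * A t y.
Definition dyg1 t y := - / t * IdB t y.
Definition dtg1 t y := / (t * t) * IB t y - / t * B t y.

Lemma isd_invt t : t <> 0 -> is_derive (fun s : R => / s) t (- / (t * t)).
Proof. intros Ht. eapply isd_ext; [intros; reflexivity| |]. 2: { apply is_derive_inv. apply isd_id. auto. }
  simpl. field. auto. Qed.

Lemma v_dy t y : is_derive (fun s => vmap psi t s) y (g1 t y).
Proof.
  eapply isd_ext; [intros; symmetry; apply vmap_eq| |].
  2: { apply isd_plus. apply isd_id. apply is_derive_scal. apply IA_dy. }
  unfold g1. ring.
Qed.

Lemma v_dt t y : t <> 0 -> is_derive (fun s => vmap psi s y) t (g2 t y).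
Proof.
  intros Ht. eapply isd_ext; [intros; symmetry; apply vmap_eq| |].
  2: { apply isd_plus. apply isd_const. apply isd_mult. apply isd_invt; auto. apply IA_dt. }
  unfold g2. ring.
Qed.

Lemma g1_dy t y : is_derive (fun s => g1 t s) y (dyg1 t y).
Proof.
  eapply isd_ext; [intros; reflexivity| |].
  2: { apply isd_minus. apply isd_const. apply is_derive_scal. apply IB_dy. }
  unfold dyg1. ring.
Qed.

Lemma g1_dt t y : t <> 0 -> is_derive (fun s => g1 s y) t (dtg1 t y).
Proof.
  intros Ht. eapply isd_ext; [intros; reflexivity| |].
  2: { apply isd_minus. apply isd_const. apply isd_mult. apply isd_invt; auto. apply IB_dt. }
  unfold dtg1. ring.
Qed.

Lemma g2_dy t y : is_derive (fun s => g2 t s) y (dtg1 t y).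
Proof.
  eapply isd_ext; [intros; reflexivity| |].
  2: { apply isd_plus. apply is_derive_scal. apply IA_dy. apply is_derive_scal. apply dA. }
  unfold dtg1. ring.
Qed.

Lemma IB_bound t y : 0 <= t <= T -> 0 <= y <= 1 -> Rabs (IB t y) <= t * / 2.
Proof.
  intros Ht Hy. unfold IB. replace (t * / 2) with ((t - 0) * / 2) by ring.
  apply abs_RInt_le_const. lra. apply exRInt_C2, C2B.
  intros. rewrite B_W by (auto; lra). apply W_small; auto; lra.
Qed.

Lemma g1_ge t y : 0 < t <= T -> 0 <= y <= 1 -> / 2 <= g1 t y.
Proof.
  intros Ht Hy. unfold g1. pose proof (IB_bound t y ltac:(lra) Hy) as Hb.
  assert (/ t * IB t y <= / 2).
  { apply Rle_trans with (/ t * Rabs (IB t y)). apply Rmult_le_compat_l.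
    left; apply Rinv_0_lt_compat; lra. apply Rle_abs.
    apply Rle_trans with (/ t * (t * / 2)). apply Rmult_le_compat_l. left; apply Rinv_0_lt_compat; lra. auto.
    right; field; lra. }
  lra.
Qed.

Lemma A_bound t y : 0 <= t <= T -> 0 <= y <= 1 -> Rabs (A t y) <= Rabs c0 + / 2.
Proof.
  intros Ht Hy. destruct (MVT_gen (fun s => A t s) 0 y (fun s => - B t s)) as [c [Hc E]].
  - intros. apply dA.
  - intros. apply continuity_pt_filterlim. apply contA.
  - rewrite Rmin_left, Rmax_right in Hc by lra.
    rewrite At0 in E by auto.
    rewrite B_W in E by (auto; lra).
    pose proof (W_small t c Ht ltac:(lra)).
    replace (A t y) with (c0 + (- W t c * (y - 0))) by lra.
    eapply Rle_trans. apply Rabs_triang. apply Rplus_le_compat_l.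
    rewrite Rabs_mult, Rabs_Ropp. rewrite (Rabs_right (y - 0)) by lra.
    apply Rle_trans with (/ 2 * 1). apply Rmult_le_compat; try lra. apply Rabs_pos. lra.
Qed.

Lemma g2_bound t y : 0 < t <= T -> 0 <= y <= 1 -> Rabs (g2 t y) <= 2 * (Rabs c0 + / 2) / t.
Proof.
  intros Ht Hy. unfold g2.
  assert (HIA : Rabs (IA t y) <= t * (Rabs c0 + / 2)).
  { unfold IA. replace (t * (Rabs c0 + / 2)) with ((t - 0) * (Rabs c0 + / 2)) by ring.
    apply abs_RInt_le_const. lra. apply exRInt_C2, C2A. intros. apply A_bound; auto; lra. }
  pose proof (A_bound t y ltac:(lra) Hy) as HA.
  eapply Rle_trans. apply Rabs_triang. rewrite !Rabs_mult, Rabs_Ropp.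
  rewrite (Rabs_right (/ (t * t))) by (left; apply Rinv_0_lt_compat; nra).
  rewrite (Rabs_right (/ t)) by (left; apply Rinv_0_lt_compat; lra).
  apply Rle_trans with (/ (t * t) * (t * (Rabs c0 + / 2)) + / t * (Rabs c0 + / 2)).
  apply Rplus_le_compat; apply Rmult_le_compat_l; auto; left; apply Rinv_0_lt_compat; nra.
  right. field. lra.
Qed.

Lemma v_strip t y : 0 < t <= T -> (0 <= y <= theta0 \/ 1 - theta0 <= y <= 1) -> vmap psi t y = y + c0.
Proof.
  intros Ht Hy. rewrite vmap_eq. unfold IA.
  rewrite (RInt_ext' _ (fun _ => c0)). rewrite RInt_const'. field. lra.
  intros. rewrite Rmin_left, Rmax_right in H by lra. apply A_strip; auto. lra.
Qed.

Lemma v0 t : 0 < t <= T -> vmap psi t 0 = c0.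
Proof. intros. rewrite v_strip; auto; lra. Qed.
Lemma v1 t : 0 < t <= T -> vmap psi t 1 = 1 + c0.
Proof. intros. rewrite v_strip; auto; lra. Qed.

Lemma v_cont t y : continuous (fun s => vmap psi t s) y.
Proof. exact (ex_derive_continuous (K := R_AbsRing) (V := R_NormedModule) _ y (ex_intro _ _ (v_dy t y))). Qed.

Lemma v_mono t y1 y2 : 0 < t <= T -> 0 <= y1 -> y1 <= y2 -> y2 <= 1 ->
  (y2 - y1) * / 2 <= vmap psi t y2 - vmap psi t y1.
Proof.
  intros Ht H1 H2 H3. destruct (MVT_gen (fun s => vmap psi t s) y1 y2 (g1 t)) as [c [Hc E]].
  - intros; apply v_dy.
  - intros; apply continuity_pt_filterlim, v_cont.
  - rewrite Rmin_left, Rmax_right in Hc by lra. rewrite E.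
    pose proof (g1_ge t c Ht ltac:(lra)). nra.
Qed.

Lemma v_range t y : 0 < t <= T -> 0 <= y <= 1 -> c0 <= vmap psi t y <= c0 + 1.
Proof.
  intros Ht Hy. pose proof (v_mono t 0 y Ht ltac:(lra) ltac:(lra) ltac:(lra)).
  pose proof (v_mono t y 1 Ht ltac:(lra) ltac:(lra) ltac:(lra)).
  rewrite v0 in *; auto. rewrite v1 in *; auto. lra.
Qed.

Lemma v_surj t w : 0 < t <= T -> c0 <= w <= c0 + 1 -> exists y, 0 <= y <= 1 /\ vmap psi t y = w.
Proof.
  intros Ht Hw. destruct (IVT_gen (fun s => vmap psi t s) 0 1 w) as [y [Hy E]].
  - intros x. apply continuity_pt_filterlim, v_cont.
  - rewrite v0, v1 by auto. rewrite Rmin_left, Rmax_right; lra.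
  - exists y. rewrite Rmin_left, Rmax_right in Hy by lra. auto.
Qed.

Lemma v_inj t y1 y2 : 0 < t <= T -> 0 <= y1 <= 1 -> 0 <= y2 <= 1 -> vmap psi t y1 = vmap psi t y2 -> y1 = y2.
Proof.
  intros Ht H1 H2 E. destruct (Rle_dec y1 y2).
  - pose proof (v_mono t y1 y2 Ht ltac:(lra) r ltac:(lra)). lra.
  - pose proof (v_mono t y2 y1 Ht ltac:(lra) ltac:(lra) ltac:(lra)). lra.
Qed.

Definition Y t w := epsilon (inhabits 0) (fun y => 0 <= y <= 1 /\ vmap psi t y = w).

Lemma Y_spec t w : 0 < t <= T -> c0 <= w <= c0 + 1 -> 0 <= Y t w <= 1 /\ vmap psi t (Y t w) = w.
Proof. intros. unfold Y. apply epsilon_spec. apply v_surj; auto. Qed.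

Lemma Y_uniq t w y : 0 < t <= T -> c0 <= w <= c0 + 1 -> 0 <= y <= 1 -> vmap psi t y = w -> y = Y t w.
Proof. intros. destruct (Y_spec t w) as [H3 H4]; auto. apply (v_inj t); auto. congruence. Qed.

Lemma Y_lip t w w' : 0 < t <= T -> c0 <= w <= c0 + 1 -> c0 <= w' <= c0 + 1 ->
  Rabs (Y t w' - Y t w) <= 2 * Rabs (w' - w).
Proof.
  intros Ht Hw Hw'. destruct (Y_spec t w) as [H1 E1]; auto. destruct (Y_spec t w') as [H2 E2]; auto.
  destruct (Rle_dec (Y t w) (Y t w')).
  - pose proof (v_mono t (Y t w) (Y t w') Ht ltac:(lra) r ltac:(lra)). rewrite E1, E2 in H.
    rewrite (Rabs_right (Y t w' - Y t w)) by lra. rewrite (Rabs_right (w' - w)) by lra. lra.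
  - pose proof (v_mono t (Y t w') (Y t w) Ht ltac:(lra) ltac:(lra) ltac:(lra)). rewrite E1, E2 in H.
    rewrite (Rabs_left (Y t w' - Y t w)) by lra. rewrite (Rabs_left (w' - w)) by lra. lra.
Qed.


Lemma C2IA t y : C2 IA t y.
Proof. exact (IV_C2 A C2A t y). Qed.
Lemma C2IB t y : C2 IB t y.
Proof. exact (IV_C2 B C2B t y). Qed.
Lemma C2IdB t y : C2 IdB t y.
Proof. exact (IV_C2 dB C2dB t y). Qed.

Lemma C2_invt t y : t <> 0 -> C2 (fun t y => / t) t y.
Proof. intros. apply (C2_inv (fun t y => t)). apply C2_id1. auto. Qed.

Lemma C2g1 t y : t <> 0 -> C2 g1 t y.
Proof. intros. unfold g1. apply C2_minus. apply C2_const. apply C2_mult. apply C2_invt; auto. apply C2IB. Qed.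
Lemma C2g2 t y : t <> 0 -> C2 g2 t y.
Proof. intros. unfold g2. apply C2_plus; apply C2_mult.
  apply C2_opp. apply (C2_inv (fun t y => t * t)). apply C2_mult; apply C2_id1. apply Rmult_integral_contrapositive; auto.
  apply C2IA. apply C2_invt; auto. apply C2A. Qed.
Lemma C2dtg1 t y : t <> 0 -> C2 dtg1 t y.
Proof. intros. unfold dtg1. apply C2_minus; apply C2_mult.
  apply (C2_inv (fun t y => t * t)). apply C2_mult; apply C2_id1. apply Rmult_integral_contrapositive; auto.
  apply C2IB. apply C2_invt; auto. apply C2B. Qed.
Lemma C2dyg1 t y : t <> 0 -> C2 dyg1 t y.
Proof. intros. unfold dyg1. apply C2_mult. apply C2_opp. apply C2_invt; auto. apply C2IdB. Qed.

Lemma diff2_g1 t y : 0 < t -> diff2 g1 t y.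
Proof.
  intros Ht. exists (t / 2); split; [lra|]. split; [|split].
  - intros a' b' H1 H2. assert (a' <> 0) by (apply Rabs_def2 in H1; lra).
    split; eexists; [apply g1_dt; auto| apply g1_dy].
  - apply (C2_ext_loc dtg1). exists (t / 2); split; [lra|]. intros a' b' H1 H2.
    assert (a' <> 0) by (apply Rabs_def2 in H1; lra). unfold dt2. symmetry. apply Dun, g1_dt; auto.
    apply C2dtg1; lra.
  - apply (C2_ext dyg1). intros; unfold dw2; symmetry; apply Dun, g1_dy. apply C2dyg1; lra.
Qed.

Lemma Y_dw t w : 0 < t <= T -> c0 < w < c0 + 1 -> is_derive (fun s => Y t s) w (/ g1 t (Y t w)).
Proof.
  intros Ht Hw. apply od_derive. intros e He.
  set (y0 := Y t w).
  destruct (Y_spec t w Ht ltac:(lra)) as [Hy0 Ev0]. fold y0 in Hy0, Ev0.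
  destruct (C2_C1_1 g1 t y0 (C2g1 t y0 ltac:(lra)) (e / 4) ltac:(lra)) as [d1 [Hd1 H1]].
  set (d := Rmin (d1 / 2) (Rmin (w - c0) (c0 + 1 - w))).
  assert (Hd : 0 < d) by (unfold d; repeat apply Rmin_glb_lt; lra).
  assert (Hdd : d <= d1 / 2 /\ d <= w - c0 /\ d <= c0 + 1 - w).
  { unfold d. pose proof (Rmin_l (d1 / 2) (Rmin (w - c0) (c0 + 1 - w))).
    pose proof (Rmin_r (d1 / 2) (Rmin (w - c0) (c0 + 1 - w))).
    pose proof (Rmin_l (w - c0) (c0 + 1 - w)). pose proof (Rmin_r (w - c0) (c0 + 1 - w)). lra. }
  exists d; split; [exact Hd|]. intros w' Hw'.
  assert (Hw'r : c0 <= w' <= c0 + 1) by (apply Rabs_def2 in Hw'; lra).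
  destruct (Y_spec t w' Ht Hw'r) as [Hy1 Ev1].
  set (y1 := Y t w') in *.
  destruct (mvt_between (fun s => vmap psi t s) y0 y1) as [eta [Heta E]].
  { intros; eexists; apply v_dy. }
  rewrite Ev0, Ev1 in E. rewrite (Dun (fun s => vmap psi t s) eta _ (v_dy t eta)) in E.
  assert (Heta01 : 0 <= eta <= 1).
  { unfold Rmin, Rmax in Heta. destruct (Rle_dec y0 y1); lra. }
  pose proof (between_abs _ _ _ Heta) as Heta'.
  pose proof (g1_ge t eta Ht Heta01) as G1. pose proof (g1_ge t y0 Ht Hy0) as G0.
  pose proof (Y_lip t w w' Ht ltac:(lra) Hw'r) as Lip. fold y0 y1 in Lip.
  assert (Hc : Rabs (g1 t eta - g1 t y0) < e / 4) by (apply H1; lra).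
  assert (E2 : y1 - y0 = (w' - w) / g1 t eta) by (rewrite E; field; lra).
  rewrite E2.
  replace ((w' - w) / g1 t eta - / g1 t y0 * (w' - w)) with ((w' - w) * (1 / g1 t eta - 1 / g1 t y0)) by (field; lra).
  rewrite Rabs_mult. rewrite Rmult_comm. apply Rmult_le_compat_r. apply Rabs_pos.
  eapply Rle_trans. rewrite <- Rabs_Ropp. replace (- (1 / g1 t eta - 1 / g1 t y0)) with (1 / g1 t y0 - 1 / g1 t eta) by ring.
  apply quot_bound; lra.
  rewrite Rminus_diag, Rabs_R0, Rabs_R1. lra.
Qed.


Lemma Y_dt t w : 0 < t < T -> c0 <= w <= c0 + 1 ->
  is_derive (fun s => Y s w) t (- g2 t (Y t w) / g1 t (Y t w)).
Proof.
  intros Ht Hw. apply od_derive. intros e He.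
  set (y0 := Y t w).
  destruct (Y_spec t w ltac:(lra) Hw) as [Hy0 Ev0]. fold y0 in Hy0, Ev0.
  set (K := Rabs c0 + / 2). assert (HK : 0 < K) by (unfold K; pose proof (Rabs_pos c0); lra).
  set (L := 2 * (4 * K / t)). assert (HL : 0 < L) by (unfold L; apply Rmult_lt_0_compat; [lra|]; apply Rdiv_lt_0_compat; lra).
  set (a0 := g2 t y0).
  destruct (C2g2 t y0 ltac:(lra) (e / 4) ltac:(lra)) as [d2 [Hd2 H2]].
  assert (He3 : 0 < e / (16 * (Rabs a0 + 1))).
  { apply Rdiv_lt_0_compat; auto. pose proof (Rabs_pos a0); lra. }
  destruct (C2_C1_1 g1 t y0 (C2g1 t y0 ltac:(lra)) _ He3) as [d3 [Hd3 H3]].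
  set (d := Rmin (Rmin (t / 2) (T - t)) (Rmin d2 (Rmin (d2 / L) (d3 / L)))).
  assert (Hd : 0 < d).
  { unfold d. repeat apply Rmin_glb_lt; try lra; apply Rdiv_lt_0_compat; lra. }
  assert (Hdd : d <= t / 2 /\ d <= T - t /\ d <= d2 /\ d <= d2 / L /\ d <= d3 / L).
  { unfold d. pose proof (Rmin_l (Rmin (t / 2) (T - t)) (Rmin d2 (Rmin (d2 / L) (d3 / L)))).
    pose proof (Rmin_r (Rmin (t / 2) (T - t)) (Rmin d2 (Rmin (d2 / L) (d3 / L)))).
    pose proof (Rmin_l (t / 2) (T - t)). pose proof (Rmin_r (t / 2) (T - t)).
    pose proof (Rmin_l d2 (Rmin (d2 / L) (d3 / L))). pose proof (Rmin_r d2 (Rmin (d2 / L) (d3 / L))).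
    pose proof (Rmin_l (d2 / L) (d3 / L)). pose proof (Rmin_r (d2 / L) (d3 / L)). lra. }
  exists d; split; [exact Hd|]. intros s Hs.
  assert (Hs' : t / 2 < s < T) by (apply Rabs_def2 in Hs; lra).
  destruct (Y_spec s w ltac:(lra) Hw) as [Hy1 Ev1].
  set (y1 := Y s w) in *.
  destruct (mvt_between (fun sg => vmap psi sg y1) t s) as [xi [Hxi E1]].
  { intros x Hx. assert (x <> 0) by (unfold Rmin, Rmax in Hx; destruct (Rle_dec t s); lra).
    eexists; apply v_dt; auto. }
  assert (Hxi' : t / 2 <= xi <= T) by (unfold Rmin, Rmax in Hxi; destruct (Rle_dec t s); lra).
  rewrite (Dun (fun sg => vmap psi sg y1) xi _ (v_dt xi y1 ltac:(lra))) in E1.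
  destruct (mvt_between (fun y => vmap psi t y) y0 y1) as [eta [Heta E2]].
  { intros; eexists; apply v_dy. }
  rewrite (Dun (fun y => vmap psi t y) eta _ (v_dy t eta)) in E2.
  assert (Heta01 : 0 <= eta <= 1) by (unfold Rmin, Rmax in Heta; destruct (Rle_dec y0 y1); lra).
  pose proof (between_abs _ _ _ Heta) as Heta'. pose proof (between_abs _ _ _ Hxi) as Hxi2.
  pose proof (g1_ge t eta ltac:(lra) Heta01) as G1. pose proof (g1_ge t y0 ltac:(lra) Hy0) as G0.
  assert (Ebal : g2 xi y1 * (s - t) + g1 t eta * (y1 - y0) = 0).
  { rewrite <- E1, <- E2. rewrite Ev0, Ev1. ring. }
  assert (Ey : y1 - y0 = - (s - t) * (g2 xi y1 / g1 t eta)).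
  { replace (y1 - y0) with ((g1 t eta * (y1 - y0)) / g1 t eta) by (field; lra).
    replace (g1 t eta * (y1 - y0)) with (- (g2 xi y1 * (s - t))) by lra. field. lra. }
  assert (Bg2 : Rabs (g2 xi y1) <= 4 * K / t).
  { assert (X : 2 * K / xi <= 4 * K / t).
    { unfold Rdiv. apply Rle_trans with (2 * K * / (t / 2)).
      apply Rmult_le_compat_l; [lra| apply Rinv_le_contravar; lra]. right; field; lra. }
    eapply Rle_trans; [apply g2_bound; lra|]. exact X. }
  assert (Lip : Rabs (y1 - y0) <= L * Rabs (s - t)).
  { rewrite Ey. rewrite Rabs_mult, Rabs_Ropp. unfold Rdiv. rewrite Rabs_mult.
    rewrite (Rabs_right (/ g1 t eta)) by (left; apply Rinv_0_lt_compat; lra).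
    assert (/ g1 t eta <= 2). { rewrite <- (Rinv_inv 2). apply Rinv_le_contravar; lra. }
    pose proof (Rabs_pos (s - t)). pose proof (Rabs_pos (g2 xi y1)).
    assert (0 < / g1 t eta) by (apply Rinv_0_lt_compat; lra).
    unfold L. replace (2 * (4 * K / t) * Rabs (s - t)) with (Rabs (s - t) * ((4 * K / t) * 2)) by ring.
    apply Rmult_le_compat_l; auto. apply Rmult_le_compat; try lra. }
  assert (HLs : L * Rabs (s - t) < L * d).
  { apply Rmult_lt_compat_l; auto. }
  assert (Ld2 : L * d <= d2) by (apply Rle_trans with (L * (d2 / L)); [apply Rmult_le_compat_l; lra| right; field; lra]).
  assert (Ld3 : L * d <= d3) by (apply Rle_trans with (L * (d3 / L)); [apply Rmult_le_compat_l; lra| right; field; lra]).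
  assert (C2b : Rabs (g2 xi y1 - a0) < e / 4) by (apply H2; lra).
  assert (C1b : Rabs (g1 t eta - g1 t y0) < e / (16 * (Rabs a0 + 1))) by (apply H3; lra).
  rewrite Ey.
  replace (- (s - t) * (g2 xi y1 / g1 t eta) - - a0 / g1 t y0 * (s - t))
    with ((s - t) * (a0 / g1 t y0 - g2 xi y1 / g1 t eta)) by (field; lra).
  rewrite Rabs_mult. rewrite Rmult_comm. apply Rmult_le_compat_r. apply Rabs_pos.
  eapply Rle_trans. apply quot_bound; lra.
  rewrite (Rabs_minus_sym a0).
  assert (X : 4 * Rabs a0 * Rabs (g1 t eta - g1 t y0) <= e / 4).
  { pose proof (Rabs_pos a0). pose proof (Rabs_pos (g1 t eta - g1 t y0)).
    apply Rle_trans with (4 * Rabs a0 * (e / (16 * (Rabs a0 + 1)))).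
    apply Rmult_le_compat_l; lra.
    apply Rle_trans with (4 * (Rabs a0 + 1) * (e / (16 * (Rabs a0 + 1)))).
    apply Rmult_le_compat_r. left; auto. lra. right; field; lra. }
  lra.
Qed.


Section Fin.
Variables (f phi : R -> R -> R -> R) (V1 V2 Vd : R -> R -> R).
Hypothesis Hdef : forall t x y, 0 < t <= T -> 0 <= y <= 1 ->
         f t (x - t * vmap psi t y) (vmap psi t y) = omega t x y /\
         phi t (x - t * vmap psi t y) (vmap psi t y) = psi t x y /\
         V1 t (vmap psi t y) = Derive (fun s => vmap psi t s) y /\
         V2 t (vmap psi t y) = Derive (fun s => Derive (fun r => vmap psi t r) s) y /\
         Vd t (vmap psi t y) = Derive (fun s => vmap psi s y) t.

Lemma Frep t z w : 0 < t <= T -> c0 <= w <= c0 + 1 ->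
  f t z w = omega t (z + t * w) (Y t w) /\ phi t z w = psi t (z + t * w) (Y t w) /\
  V1 t w = g1 t (Y t w) /\ V2 t w = dyg1 t (Y t w) /\ Vd t w = g2 t (Y t w).
Proof.
  intros Ht Hw. destruct (Y_spec t w Ht Hw) as [Hy E].
  destruct (Hdef t (z + t * w) (Y t w) Ht Hy) as [H1 [H2 [H3 [H4 H5]]]].
  rewrite E in H1, H2, H3, H4, H5. replace (z + t * w - t * w) with z in H1, H2 by ring.
  split; [|split; [|split; [|split]]]; auto.
  - rewrite H3. apply Dun, v_dy.
  - rewrite H4. rewrite (Derive_ext _ (fun s => g1 t s)). apply Dun, g1_dy.
    intros; apply Dun, v_dy.
  - rewrite H5. apply Dun, v_dt. lra.
Qed.


Lemma near_w w : c0 < w < c0 + 1 -> exists d, 0 < d /\ forall r, Rabs (r - w) < d -> c0 < r < c0 + 1.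
Proof. intros Hw. exists (Rmin (w - c0) (c0 + 1 - w)). split. apply Rmin_glb_lt; lra.
  intros r Hr. pose proof (Rmin_l (w - c0) (c0 + 1 - w)). pose proof (Rmin_r (w - c0) (c0 + 1 - w)).
  apply Rabs_def2 in Hr. lra. Qed.
Lemma near_t t : 0 < t < T -> exists d, 0 < d /\ forall s, Rabs (s - t) < d -> 0 < s < T.
Proof. intros Ht. exists (Rmin t (T - t)). split. apply Rmin_glb_lt; lra.
  intros r Hr. pose proof (Rmin_l t (T - t)). pose proof (Rmin_r t (T - t)).
  apply Rabs_def2 in Hr. lra. Qed.

Lemma avgf t w : 0 < t <= T -> c0 <= w <= c0 + 1 -> avgz f t w = W t (Y t w).
Proof.
  intros Ht Hw. unfold avgz, W.
  rewrite (avg_ext _ (fun z => omega t (z + t * w) (Y t w))).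
  2: { intros. apply Frep; auto. }
  apply (avg_shift (fun x => omega t x (Y t w))). apply sm_cont, Hom. intros; apply Hpo.
Qed.

Lemma Vd_dw t w : 0 < t <= T -> c0 < w < c0 + 1 ->
  is_derive (fun s => Vd t s) w (dtg1 t (Y t w) * / g1 t (Y t w)).
Proof.
  intros Ht Hw. destruct (near_w w Hw) as [d [Hd Hn]].
  apply (isd_loc (fun s => g2 t (Y t s)) _ _ _ d Hd).
  intros r Hr. symmetry. apply Frep; auto. specialize (Hn r Hr). lra.
  apply isd_comp. apply g2_dy. apply Y_dw; auto.
Qed.

Lemma tdtg1 t y : 0 < t <= T -> 0 <= y <= 1 -> t * dtg1 t y = 1 - g1 t y - W t y.
Proof. intros Ht Hy. unfold dtg1, g1. rewrite <- B_W by (auto; lra). field. lra. Qed.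

Lemma Hform t w : 0 < t <= T -> c0 < w < c0 + 1 ->
  t * V1 t w * dw2 Vd t w = 1 - g1 t (Y t w) - W t (Y t w).
Proof.
  intros Ht Hw. unfold dw2. rewrite (Dun (fun s => Vd t s) w _ (Vd_dw t w Ht Hw)).
  destruct (Frep t 0 w Ht ltac:(lra)) as [_ [_ [-> _]]].
  destruct (Y_spec t w Ht ltac:(lra)) as [Hy _].
  pose proof (g1_ge t (Y t w) Ht Hy).
  rewrite <- tdtg1 by auto. field. lra.
Qed.


Lemma Ystrip t w : 0 < t <= T -> c0 <= w <= c0 + 1 -> (w < c0 + theta0 \/ c0 + 1 - theta0 < w) ->
  Y t w = w - c0.
Proof.
  intros Ht Hw Hs. symmetry. apply Y_uniq; auto. lra. rewrite v_strip; auto. ring. lra.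
Qed.

Lemma supp_fV t z w : 0 < t <= T -> c0 <= w <= c0 + 1 -> (w < c0 + theta0 \/ c0 + 1 - theta0 < w) ->
  f t z w = 0 /\ V1 t w - 1 = 0.
Proof.
  intros Ht Hw Hs. destruct (Frep t z w Ht Hw) as [-> [_ [-> _]]]. rewrite Ystrip by auto.
  split.
  - apply Hsupp; lra.
  - unfold g1, IB. rewrite (RInt_ext' _ (fun _ => 0)). rewrite RInt_const'. ring.
    intros x Hx. rewrite Rmin_left, Rmax_right in Hx by lra. rewrite B_W by lra. apply W_supp; lra.
Qed.

Lemma Vd_bd t : 0 < t <= T -> Vd t c0 = 0 /\ Vd t (1 + c0) = 0.
Proof.
  intros Ht. split.
  - destruct (Frep t 0 c0 Ht ltac:(lra)) as [_ [_ [_ [_ ->]]]].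
    rewrite <- (Y_uniq t c0 0 Ht ltac:(lra) ltac:(lra) (v0 t Ht)).
    unfold g2, IA. rewrite (RInt_ext' _ (fun _ => c0)). rewrite RInt_const'. rewrite At0 by lra. field. lra.
    intros x Hx. rewrite Rmin_left, Rmax_right in Hx by lra. apply At0; lra.
  - destruct (Frep t 0 (1 + c0) Ht ltac:(lra)) as [_ [_ [_ [_ ->]]]].
    rewrite <- (Y_uniq t (1 + c0) 1 Ht ltac:(lra) ltac:(lra) (v1 t Ht)).
    unfold g2, IA. rewrite (RInt_ext' _ (fun _ => c0)). rewrite RInt_const'. rewrite A_strip by lra. field. lra.
    intros x Hx. rewrite Rmin_left, Rmax_right in Hx by lra. apply A_strip; lra.
Qed.

Lemma isd_lin a b x : is_derive (fun s : R => a + s * b) x b.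
Proof. eapply isd_ext; [intros; reflexivity| |]. 2: { apply isd_plus. apply isd_const. apply isd_mult. apply isd_id. apply isd_const. }
  cbv beta. ring. Qed.
Lemma isd_lin' a b x : is_derive (fun s : R => a + b * s) x b.
Proof. eapply isd_ext; [intros; reflexivity| |]. 2: { apply isd_plus. apply isd_const. apply isd_mult. apply isd_const. apply isd_id. }
  cbv beta. ring. Qed.

Lemma f_dt t z w : 0 < t < T -> c0 < w < c0 + 1 ->
  d_t f t z w = d_t omega t (z + t * w) (Y t w) * 1 + d_1 omega t (z + t * w) (Y t w) * w
     + d_2 omega t (z + t * w) (Y t w) * (- g2 t (Y t w) / g1 t (Y t w)).
Proof.
  intros Ht Hw. unfold d_t at 1. apply Dun. destruct (near_t t Ht) as [d [Hd Hn]].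
  apply (isd_loc (fun s => omega s (z + s * w) (Y s w)) _ _ _ d Hd).
  intros s Hs. specialize (Hn s Hs). symmetry. apply Frep; lra.
  apply (chain3 omega (fun s => s) (fun s => z + s * w) (fun s => Y s w)).
  apply smooth3_diff3, Hom. apply isd_id. apply isd_lin. apply Y_dt; lra.
Qed.

Lemma f_d1 t z w : 0 < t <= T -> c0 <= w <= c0 + 1 -> d_1 f t z w = d_1 omega t (z + t * w) (Y t w).
Proof.
  intros Ht Hw. unfold d_1. rewrite (Derive_ext _ (fun s => omega t (s + t * w) (Y t w))).
  apply (Derive_shift (fun x => omega t x (Y t w))). apply exd1, Hom.
  intros; apply Frep; auto.
Qed.

Lemma phi_d1 t z w : 0 < t <= T -> c0 <= w <= c0 + 1 -> d_1 phi t z w = d_1 psi t (z + t * w) (Y t w).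
Proof.
  intros Ht Hw. unfold d_1. rewrite (Derive_ext _ (fun s => psi t (s + t * w) (Y t w))).
  apply (Derive_shift (fun x => psi t x (Y t w))). apply exd1, Hps.
  intros; apply Frep; auto.
Qed.

Lemma f_d2 t z w : 0 < t <= T -> c0 < w < c0 + 1 ->
  d_2 f t z w = d_t omega t (z + t * w) (Y t w) * 0 + d_1 omega t (z + t * w) (Y t w) * t
     + d_2 omega t (z + t * w) (Y t w) * / g1 t (Y t w).
Proof.
  intros Ht Hw. unfold d_2 at 1. apply Dun. destruct (near_w w Hw) as [d [Hd Hn]].
  apply (isd_loc (fun r => omega t (z + t * r) (Y t r)) _ _ _ d Hd).
  intros r Hr. specialize (Hn r Hr). symmetry. apply Frep; lra.
  apply (chain3 omega (fun _ => t) (fun r => z + t * r) (fun r => Y t r)).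
  apply smooth3_diff3, Hom. apply isd_const. apply isd_lin'. apply Y_dw; lra.
Qed.

Lemma phi_d2_is t z w : 0 < t <= T -> c0 < w < c0 + 1 ->
  is_derive (fun r => phi t z r) w (d_t psi t (z + t * w) (Y t w) * 0 + d_1 psi t (z + t * w) (Y t w) * t
     + d_2 psi t (z + t * w) (Y t w) * / g1 t (Y t w)).
Proof.
  intros Ht Hw. destruct (near_w w Hw) as [d [Hd Hn]].
  apply (isd_loc (fun r => psi t (z + t * r) (Y t r)) _ _ _ d Hd).
  intros r Hr. specialize (Hn r Hr). symmetry. apply Frep; lra.
  apply (chain3 psi (fun _ => t) (fun r => z + t * r) (fun r => Y t r)).
  apply smooth3_diff3, Hps. apply isd_const. apply isd_lin'. apply Y_dw; lra.
Qed.

Lemma avgphi t r : 0 < t <= T -> c0 <= r <= c0 + 1 -> avgz phi t r = Ps t (Y t r).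
Proof.
  intros Ht Hr. unfold avgz, Ps.
  rewrite (avg_ext _ (fun z => psi t (z + t * r) (Y t r))).
  2: { intros. apply Frep; auto. }
  apply (avg_shift (fun x => psi t x (Y t r))). apply sm_cont, Hps. intros; apply Hpp.
Qed.

Lemma Pne0_d2 t z w : 0 < t <= T -> c0 < w < c0 + 1 ->
  d_2 (Pne0 phi) t z w = (d_t psi t (z + t * w) (Y t w) * 0 + d_1 psi t (z + t * w) (Y t w) * t
     + d_2 psi t (z + t * w) (Y t w) * / g1 t (Y t w)) - A2 t (Y t w) * / g1 t (Y t w).
Proof.
  intros Ht Hw. unfold d_2 at 1, Pne0. apply Dun. destruct (near_w w Hw) as [d [Hd Hn]].
  apply (isd_loc (fun r => phi t z r - Ps t (Y t r)) _ _ _ d Hd).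
  intros r Hr. specialize (Hn r Hr). rewrite avgphi; auto; lra.
  apply isd_minus. apply phi_d2_is; auto. apply isd_comp. apply dPs. apply Y_dw; auto.
Qed.


Lemma f_evol t z w : 0 < t < T -> c0 < w < c0 + 1 ->
  d_t f t z w = V1 t w * d_2 (Pne0 phi) t z w * d_1 f t z w
           - (Vd t w + V1 t w * d_1 phi t z w) * d_2 f t z w.
Proof.
  intros Ht Hw.
  rewrite f_dt, Pne0_d2, f_d1, phi_d1, f_d2 by lra.
  destruct (Frep t z w ltac:(lra) ltac:(lra)) as [_ [_ [-> [_ ->]]]].
  destruct (Y_spec t w ltac:(lra) ltac:(lra)) as [Hy Ev].
  pose proof (g1_ge t (Y t w) ltac:(lra) Hy) as G.
  pose proof (Htr t (z + t * w) (Y t w) ltac:(lra) Hy) as Tr. unfold ux in Tr.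
  set (Yv := Y t w) in *. set (X := z + t * w) in *.
  rewrite vmap_eq in Ev.
  replace (d_t omega t X Yv) with (- Yv * d_1 omega t X Yv + d_2 psi t X Yv * d_1 omega t X Yv
     - d_1 psi t X Yv * d_2 omega t X Yv) by lra.
  rewrite <- Ev. unfold g2. rewrite A_A2. field. split; lra.
Qed.


Lemma V1_dt_is t w : 0 < t < T -> c0 < w < c0 + 1 ->
  is_derive (fun s => V1 s w - 1) t (dtg1 t (Y t w) * 1 + dyg1 t (Y t w) * (- g2 t (Y t w) / g1 t (Y t w)) - 0).
Proof.
  intros Ht Hw. destruct (near_t t Ht) as [d [Hd Hn]].
  apply (isd_loc (fun s => g1 s (Y s w) - 1) _ _ _ d Hd).
  intros s Hs. specialize (Hn s Hs). destruct (Frep s 0 w ltac:(lra) ltac:(lra)) as [_ [_ [HV _]]].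
  rewrite HV. reflexivity.
  apply isd_minus; [|apply isd_const].
  eapply isd_ext; [intros; reflexivity| |].
  2: { apply (chain2 g1 (fun s => s) (fun s => Y s w)). apply diff2_g1; lra. apply isd_id. apply Y_dt; lra. }
  unfold dt2, dw2. rewrite (Dun (fun s => g1 s (Y t w)) t _ (g1_dt t (Y t w) ltac:(lra))).
  rewrite (Dun (fun s => g1 t s) (Y t w) _ (g1_dy t (Y t w))). reflexivity.
Qed.

Lemma V1_dw_is t w : 0 < t <= T -> c0 < w < c0 + 1 ->
  is_derive (fun r => V1 t r) w (dyg1 t (Y t w) * / g1 t (Y t w)).
Proof.
  intros Ht Hw. destruct (near_w w Hw) as [d [Hd Hn]].
  apply (isd_loc (fun r => g1 t (Y t r)) _ _ _ d Hd).
  intros r Hr. specialize (Hn r Hr). destruct (Frep t 0 r ltac:(lra) ltac:(lra)) as [_ [_ [HV _]]].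
  rewrite HV. reflexivity.
  apply isd_comp. apply g1_dy. apply Y_dw; auto.
Qed.

Lemma V1_evol t w : 0 < t < T -> c0 < w < c0 + 1 ->
  dt2 (fun s r => V1 s r - 1) t w =
           (t * V1 t w * dw2 Vd t w) / t - Vd t w * dw2 (fun s r => V1 s r - 1) t w.
Proof.
  intros Ht Hw. unfold dt2 at 1. rewrite (Dun (fun s => V1 s w - 1) t _ (V1_dt_is t w Ht Hw)).
  unfold dw2 at 2. rewrite (Dun (fun r => V1 t r - 1) w (dyg1 t (Y t w) * / g1 t (Y t w) - 0)).
  2: { apply isd_minus. apply V1_dw_is; auto; lra. apply isd_const. }
  rewrite Hform by lra.
  destruct (Frep t 0 w ltac:(lra) ltac:(lra)) as [_ [_ [_ [_ ->]]]].
  destruct (Y_spec t w ltac:(lra) ltac:(lra)) as [Hy Ev].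
  pose proof (g1_ge t (Y t w) ltac:(lra) Hy) as G.
  rewrite <- tdtg1 by lra. field. split; lra.
Qed.

Lemma V_eqs t w : 0 < t <= T -> c0 < w < c0 + 1 ->
  dw2 Vd t w = (t * V1 t w * dw2 Vd t w) / (t * V1 t w) /\ V2 t w = V1 t w * dw2 V1 t w.
Proof.
  intros Ht Hw.
  destruct (Y_spec t w ltac:(lra) ltac:(lra)) as [Hy Ev].
  pose proof (g1_ge t (Y t w) ltac:(lra) Hy) as G.
  unfold dw2 at 3. rewrite (Dun (fun r => V1 t r) w _ (V1_dw_is t w Ht Hw)).
  destruct (Frep t 0 w ltac:(lra) ltac:(lra)) as [_ [_ [-> [-> _]]]].
  split. field. split; lra. field. lra.
Qed.

Lemma ch_r G t z w : smooth3 G -> 0 < t <= T -> c0 < w < c0 + 1 ->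
  is_derive (fun r => G t (z + t * r) (Y t r)) w
   (d_t G t (z + t * w) (Y t w) * 0 + d_1 G t (z + t * w) (Y t w) * t + d_2 G t (z + t * w) (Y t w) * / g1 t (Y t w)).
Proof.
  intros HG Ht Hw. apply (chain3 G (fun _ => t) (fun r => z + t * r) (fun r => Y t r)).
  apply smooth3_diff3, HG. apply isd_const. apply isd_lin'. apply Y_dw; auto.
Qed.

Lemma isd_sh G t c y z : smooth3 G -> is_derive (fun a => G t (a + c) y) z (d_1 G t (z + c) y).
Proof.
  intros HG. assert (D : is_derive (fun a => a + c) z 1).
  { eapply isd_ext; [intros; reflexivity| |]. 2: { apply isd_plus. apply isd_id. apply isd_const. } ring. }
  eapply isd_ext; [intros; reflexivity| |].
  2: { apply (isd_comp (fun x => G t x y) (fun a => a + c)). apply (isd_d1 G t (z + c) y HG). exact D. }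
  ring.
Qed.

Lemma ellip t z w : 0 < t <= T -> c0 < w < c0 + 1 ->
         let L := fun s a b => d_2 phi s a b - t * d_1 phi s a b in
         d_1 (d_1 phi) t z w
         + (V1 t w) ^ 2 * (d_2 L t z w - t * d_1 L t z w)
         + V2 t w * L t z w = f t z w.
Proof.
  intros Ht Hw L.
  destruct (Y_spec t w ltac:(lra) ltac:(lra)) as [Hy Ev].
  pose proof (g1_ge t (Y t w) ltac:(lra) Hy) as G.
  assert (Hphi2 : forall a r, c0 < r < c0 + 1 -> d_2 phi t a r = d_t psi t (a + t * r) (Y t r) * 0 + d_1 psi t (a + t * r) (Y t r) * t
     + d_2 psi t (a + t * r) (Y t r) * / g1 t (Y t r)).
  { intros a r Hr. unfold d_2 at 1. apply Dun. apply phi_d2_is; auto. }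
  assert (E11 : d_1 (d_1 phi) t z w = d_1 (d_1 psi) t (z + t * w) (Y t w)).
  { unfold d_1 at 1. rewrite (Derive_ext _ (fun a => d_1 psi t (a + t * w) (Y t w))).
    apply Dun, isd_sh. sm. intros; apply phi_d1; auto; lra. }
  assert (ELw : L t z w = d_2 psi t (z + t * w) (Y t w) * / g1 t (Y t w)).
  { unfold L. rewrite Hphi2 by auto. rewrite phi_d1 by (auto; lra). ring. }
  assert (E1L : d_1 L t z w = d_1 (d_2 psi) t (z + t * w) (Y t w) * / g1 t (Y t w)).
  { unfold d_1 at 1. apply Dun.
    eapply (isd_ext (fun a => d_t psi t (a + t * w) (Y t w) * 0 + d_1 psi t (a + t * w) (Y t w) * t
     + d_2 psi t (a + t * w) (Y t w) * / g1 t (Y t w) - t * d_1 psi t (a + t * w) (Y t w)) _ z).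
    - intros a. unfold L. rewrite Hphi2 by auto. rewrite phi_d1 by (auto; lra). reflexivity.
    - 2: { apply isd_minus. apply isd_plus. apply isd_plus.
      apply isd_mult. apply isd_sh; sm. apply isd_const.
      apply isd_mult. apply isd_sh; sm. apply isd_const.
      apply isd_mult. apply isd_sh; sm. apply isd_const.
      apply is_derive_scal. apply isd_sh; sm. }
      cbv beta. ring. }
  assert (Dinv : is_derive (fun r => / g1 t (Y t r)) w (- (dyg1 t (Y t w) * / g1 t (Y t w)) / (g1 t (Y t w)) ^ 2)).
  { apply (is_derive_inv (fun r => g1 t (Y t r))). apply isd_comp. apply g1_dy. apply Y_dw; auto. lra. }
  assert (E2L : d_2 L t z w = d_1 (d_2 psi) t (z + t * w) (Y t w) * t * / g1 t (Y t w)
      + d_2 (d_2 psi) t (z + t * w) (Y t w) * / g1 t (Y t w) * / g1 t (Y t w)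
      + d_2 psi t (z + t * w) (Y t w) * (- (dyg1 t (Y t w) * / g1 t (Y t w)) / (g1 t (Y t w)) ^ 2)).
  { unfold d_2 at 1. apply Dun. destruct (near_w w Hw) as [d [Hd Hn]].
    apply (isd_loc (fun r => d_t psi t (z + t * r) (Y t r) * 0 + d_1 psi t (z + t * r) (Y t r) * t
     + d_2 psi t (z + t * r) (Y t r) * / g1 t (Y t r) - t * d_1 psi t (z + t * r) (Y t r)) _ _ _ d Hd).
    { intros r Hr. specialize (Hn r Hr). unfold L. rewrite Hphi2 by auto.
      destruct (Frep t z r ltac:(lra) ltac:(lra)) as [_ _].
      rewrite phi_d1 by (auto; lra). reflexivity. }
    eapply isd_ext; [intros; reflexivity| |].
    2: { apply isd_minus. apply isd_plus. apply isd_plus.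
      apply isd_mult. apply ch_r; auto; sm. apply isd_const.
      apply isd_mult. apply ch_r; auto; sm. apply isd_const.
      apply isd_mult. apply ch_r; auto; sm. apply Dinv.
      apply is_derive_scal. apply ch_r; auto; sm. }
    cbv beta. field. lra. }
  rewrite E11, E1L, E2L, ELw.
  destruct (Frep t z w ltac:(lra) ltac:(lra)) as [-> [_ [-> [-> _]]]].
  rewrite <- (Hlap t (z + t * w) (Y t w)) by (auto; lra).
  field. lra.
Qed.


Lemma H_loc t w : 0 < t <= T -> c0 < w < c0 + 1 ->
  t * V1 t w * dw2 Vd t w = 1 - g1 t (Y t w) - W t (Y t w).
Proof. apply Hform. Qed.

Lemma avgP1 t w : 0 < t <= T -> c0 < w < c0 + 1 ->
  avgz (fun s z r => d_2 (Pne0 phi) s z r * d_1 f s z r) t w =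
  t * avgz (fun s x y => d_1 psi s x y * d_1 omega s x y) t (Y t w)
  + / g1 t (Y t w) * avgz (fun s x y => d_2 psi s x y * d_1 omega s x y) t (Y t w).
Proof.
  intros Ht Hw. unfold avgz.
  set (Yv := Y t w). set (gg := / g1 t Yv). set (a2 := A2 t Yv).
  set (G := fun x => (d_t psi t x Yv * 0 + d_1 psi t x Yv * t + d_2 psi t x Yv * gg - a2 * gg)
     * d_1 omega t x Yv).
  rewrite (avg_ext _ (fun z => G (z + t * w))).
  2: { intros z. unfold G. rewrite Pne0_d2, f_d1 by (auto; lra). reflexivity. }
  rewrite avg_shift.
  2: { unfold G. cc. }
  2: { intros x. unfold G. rewrite (periodic_dt psi Hpp), (periodic_d1 psi Hps Hpp), (periodic_d2 psi Hpp),
       (periodic_d1 omega Hom Hpo). reflexivity. }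
  rewrite (avg_ext _ (fun x => t * (d_1 psi t x Yv * d_1 omega t x Yv) +
     (gg * (d_2 psi t x Yv * d_1 omega t x Yv) - (a2 * gg) * d_1 omega t x Yv))).
  2: { intros. unfold G. ring. }
  rewrite avg_plus, avg_minus, !avg_scal; try cc.
  pose proof (avg_d1_zero omega t Yv Hom Hpo) as Z. unfold avgz in Z. rewrite Z. ring.
Qed.

Lemma avgP2 t w : 0 < t <= T -> c0 < w < c0 + 1 ->
  avgz (fun s z r => d_1 phi s z r * d_2 f s z r) t w =
  t * avgz (fun s x y => d_1 psi s x y * d_1 omega s x y) t (Y t w)
  + / g1 t (Y t w) * avgz (fun s x y => d_1 psi s x y * d_2 omega s x y) t (Y t w).
Proof.
  intros Ht Hw. unfold avgz.
  set (Yv := Y t w). set (gg := / g1 t Yv).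
  set (G := fun x => d_1 psi t x Yv * (d_t omega t x Yv * 0 + d_1 omega t x Yv * t
     + d_2 omega t x Yv * gg)).
  rewrite (avg_ext _ (fun z => G (z + t * w))).
  2: { intros z. unfold G. rewrite phi_d1, f_d2 by (auto; lra). reflexivity. }
  rewrite avg_shift.
  2: { unfold G. cc. }
  2: { intros x. unfold G. rewrite (periodic_dt omega Hpo), (periodic_d1 psi Hps Hpp), (periodic_d2 omega Hpo),
       (periodic_d1 omega Hom Hpo). reflexivity. }
  rewrite (avg_ext _ (fun x => t * (d_1 psi t x Yv * d_1 omega t x Yv) +
     gg * (d_1 psi t x Yv * d_2 omega t x Yv))).
  2: { intros. unfold G. ring. }
  rewrite avg_plus, !avg_scal; try cc. reflexivity.
Qed.

Lemma Wt_form t y : 0 <= t <= T -> 0 <= y <= 1 ->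
  avgz (d_t omega) t y = avgz (fun s x y => d_2 psi s x y * d_1 omega s x y) t y
     - avgz (fun s x y => d_1 psi s x y * d_2 omega s x y) t y.
Proof.
  intros Ht Hy. unfold avgz.
  rewrite (avg_ext _ (fun x => - y * d_1 omega t x y + (d_2 psi t x y * d_1 omega t x y
     - d_1 psi t x y * d_2 omega t x y))).
  2: { intros x. pose proof (Htr t x y Ht Hy) as Tr. unfold ux in Tr. lra. }
  rewrite avg_plus, avg_minus, avg_scal; try cc.
  pose proof (avg_d1_zero omega t y Hom Hpo) as Z. unfold avgz in Z. rewrite Z. ring.
Qed.


Lemma H_evol t w : 0 < t < T -> c0 < w < c0 + 1 ->
  dt2 (fun t w => t * V1 t w * dw2 Vd t w) t w =
     - ((t * V1 t w * dw2 Vd t w) / t) - Vd t w * dw2 (fun t w => t * V1 t w * dw2 Vd t w) t w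
     - V1 t w * avgz (fun s z r => d_2 (Pne0 phi) s z r * d_1 f s z r) t w
     + V1 t w * avgz (fun s z r => d_1 phi s z r * d_2 f s z r) t w.
Proof.
  intros Ht Hw.
  destruct (Y_spec t w ltac:(lra) ltac:(lra)) as [Hy Ev].
  pose proof (g1_ge t (Y t w) ltac:(lra) Hy) as G.
  set (Yv := Y t w) in *.
  set (Yt := - g2 t Yv / g1 t Yv).
  assert (ET : dt2 (fun t w => t * V1 t w * dw2 Vd t w) t w =
     (0 - (dt2 g1 t Yv * 1 + dw2 g1 t Yv * Yt) - (dt2 W t Yv * 1 + dw2 W t Yv * Yt))).
  { apply Dun. destruct (near_t t Ht) as [d [Hd Hn]].
    apply (isd_loc (fun s => 1 - g1 s (Y s w) - W s (Y s w)) _ _ _ d Hd).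
    intros s Hs. specialize (Hn s Hs). symmetry. apply H_loc; lra.
    apply isd_minus. apply isd_minus. apply isd_const.
    apply (chain2 g1 (fun s => s) (fun s => Y s w)). apply diff2_g1; lra. apply isd_id. apply Y_dt; lra.
    apply (chain2 W (fun s => s) (fun s => Y s w)). apply avg_diff2, Hom. apply isd_id. apply Y_dt; lra. }
  assert (EW : dw2 (fun t w => t * V1 t w * dw2 Vd t w) t w =
     (0 - dyg1 t Yv * / g1 t Yv - avgz (d_2 omega) t Yv * / g1 t Yv)).
  { apply Dun. destruct (near_w w Hw) as [d [Hd Hn]].
    apply (isd_loc (fun r => 1 - g1 t (Y t r) - W t (Y t r)) _ _ _ d Hd).
    intros r Hr. specialize (Hn r Hr). symmetry. apply H_loc; lra.
    apply isd_minus. apply isd_minus. apply isd_const.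
    apply isd_comp. apply g1_dy. apply Y_dw; lra.
    apply isd_comp. apply avg_dy, Hom. apply Y_dw; lra. }
  rewrite ET, EW.
  rewrite avgP1, avgP2 by lra.
  rewrite H_loc by lra.
  destruct (Frep t 0 w ltac:(lra) ltac:(lra)) as [_ [_ [-> [_ ->]]]]. fold Yv.
  unfold dt2, dw2.
  rewrite (Dun (fun s => g1 s Yv) t _ (g1_dt t Yv ltac:(lra))).
  rewrite (Dun (fun s => g1 t s) Yv _ (g1_dy t Yv)).
  rewrite (Dun (fun s => W s Yv) t _ (avg_dt omega t Yv Hom)).
  rewrite (Dun (fun s => W t s) Yv _ (avg_dy omega t Yv Hom)).
  rewrite Wt_form by lra.
  rewrite <- (tdtg1 t Yv) by lra.
  unfold Yt. field. split; lra.
Qed.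

End Fin.

Lemma main_concl :
  exists c0 : R,
    (forall t y, 0 <= t <= T -> (0 <= y <= theta0 \/ 1 - theta0 <= y <= 1) ->
       avgz (ux psi) t y = c0) /\
    (forall t y, 0 < t <= T -> 0 <= y <= 1 ->
       c0 <= vmap psi t y <= c0 + 1) /\
    (forall t w, 0 < t <= T -> c0 <= w <= c0 + 1 ->
       exists y, (0 <= y <= 1 /\ vmap psi t y = w) /\
         forall y', 0 <= y' <= 1 -> vmap psi t y' = w -> y' = y) /\
    forall (f phi : R -> R -> R -> R) (V1 V2 Vd : R -> R -> R),
      (forall t x y, 0 < t <= T -> 0 <= y <= 1 ->
         f t (x - t * vmap psi t y) (vmap psi t y) = omega t x y /\
         phi t (x - t * vmap psi t y) (vmap psi t y) = psi t x y /\
         V1 t (vmap psi t y) = Derive (fun s => vmap psi t s) y /\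
         V2 t (vmap psi t y) = Derive (fun s => Derive (fun r => vmap psi t r) s) y /\
         Vd t (vmap psi t y) = Derive (fun s => vmap psi s y) t) ->
      let H := fun t w => t * V1 t w * dw2 Vd t w in
      (forall t w, 0 < t <= T -> c0 < w < c0 + 1 ->
         H t w = 1 - V1 t w - avgz f t w) /\
      (forall t z w, 0 < t <= T -> c0 <= w <= c0 + 1 ->
         (w < c0 + theta0 \/ c0 + 1 - theta0 < w) ->
         f t z w = 0 /\ V1 t w - 1 = 0) /\
      (forall t w, 0 < t <= T -> c0 < w < c0 + 1 ->
         (w < c0 + theta0 \/ c0 + 1 - theta0 < w) -> H t w = 0) /\
      (forall t z w, 0 < t < T -> c0 < w < c0 + 1 ->
         d_t f t z w =
           V1 t w * d_2 (Pne0 phi) t z w * d_1 f t z w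
           - (Vd t w + V1 t w * d_1 phi t z w) * d_2 f t z w) /\
      (forall t w, 0 < t < T -> c0 < w < c0 + 1 ->
         dt2 (fun s r => V1 s r - 1) t w =
           H t w / t - Vd t w * dw2 (fun s r => V1 s r - 1) t w) /\
      (forall t w, 0 < t < T -> c0 < w < c0 + 1 ->
         dt2 H t w =
           - (H t w / t) - Vd t w * dw2 H t w
           - V1 t w * avgz (fun s z r => d_2 (Pne0 phi) s z r * d_1 f s z r) t w
           + V1 t w * avgz (fun s z r => d_1 phi s z r * d_2 f s z r) t w) /\
      (forall t z w, 0 < t <= T -> c0 < w < c0 + 1 ->
         let L := fun s a b => d_2 phi s a b - t * d_1 phi s a b in
         d_1 (d_1 phi) t z w
         + (V1 t w) ^ 2 * (d_2 L t z w - t * d_1 L t z w)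
         + V2 t w * L t z w = f t z w) /\
      (forall t w, 0 < t <= T -> c0 < w < c0 + 1 ->
         dw2 Vd t w = H t w / (t * V1 t w) /\ V2 t w = V1 t w * dw2 V1 t w) /\
      (forall t, 0 < t <= T -> Vd t c0 = 0 /\ Vd t (1 + c0) = 0).
Proof.
  exists c0. split; [|split; [|split]].
  - intros t y Ht Hy. apply A_strip; auto.
  - intros. apply v_range; auto.
  - intros t w Ht Hw. exists (Y t w). split. apply Y_spec; auto.
    intros y' Hy' E. apply Y_uniq; auto.
  - intros f phi V1 V2 Vd Hdef H.
    assert (C1 : forall t w, 0 < t <= T -> c0 < w < c0 + 1 -> H t w = 1 - V1 t w - avgz f t w).
    { intros t w Ht Hw. unfold H. rewrite (Hform f phi V1 V2 Vd Hdef t w Ht Hw).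
      destruct (Frep f phi V1 V2 Vd Hdef t 0 w Ht ltac:(lra)) as [_ [_ [-> _]]].
      rewrite (avgf f phi V1 V2 Vd Hdef t w Ht ltac:(lra)). ring. }
    split; [|split; [|split; [|split; [|split; [|split; [|split; [|split]]]]]]].
    + exact C1.
    + intros t z w Ht Hw Hs. exact (supp_fV f phi V1 V2 Vd Hdef t z w Ht Hw Hs).
    + intros t w Ht Hw Hs. rewrite C1 by auto.
      destruct (supp_fV f phi V1 V2 Vd Hdef t 0 w Ht ltac:(lra) Hs) as [_ HV].
      rewrite (avgf f phi V1 V2 Vd Hdef t w Ht ltac:(lra)).
      rewrite Ystrip by (auto; lra). rewrite W_supp by lra. lra.
    + intros t z w Ht Hw. exact (f_evol f phi V1 V2 Vd Hdef t z w Ht Hw).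
    + intros t w Ht Hw. exact (V1_evol f phi V1 V2 Vd Hdef t w Ht Hw).
    + intros t w Ht Hw. exact (H_evol f phi V1 V2 Vd Hdef t w Ht Hw).
    + intros t z w Ht Hw. exact (ellip f phi V1 V2 Vd Hdef t z w Ht Hw).
    + intros t w Ht Hw. exact (V_eqs f phi V1 V2 Vd Hdef t w Ht Hw).
    + intros t Ht. exact (Vd_bd f phi V1 V2 Vd Hdef t Ht).
Qed.

End Main.

Theorem proposition2p1 :
  exists eps : R, 0 < eps /\
  forall (theta0 T : R) (omega psi : R -> R -> R -> R),
    0 < theta0 -> theta0 <= / 8 -> 0 < T ->
    (* sufficiently smooth solution *)
    smooth3 omega -> smooth3 psi ->
    (* 2*PI-periodicity in x *)
    (forall t x y, omega t (x + 2 * PI) y = omega t x y) ->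
    (forall t x y, psi t (x + 2 * PI) y = psi t x y) ->
    (* transport equation: d_t w + y d_x w + u . grad w = 0, u = (-d_y psi, d_x psi) *)
    (forall t x y, 0 <= t <= T -> 0 <= y <= 1 ->
       d_t omega t x y + y * d_1 omega t x y
       + ux psi t x y * d_1 omega t x y + d_1 psi t x y * d_2 omega t x y = 0) ->
    (* Delta psi = omega *)
    (forall t x y, 0 <= t <= T -> 0 <= y <= 1 ->
       d_1 (d_1 psi) t x y + d_2 (d_2 psi) t x y = omega t x y) ->
    (* Dirichlet boundary conditions *)
    (forall t x, 0 <= t <= T -> psi t x 0 = 0 /\ psi t x 1 = 0) ->
    (* zero mean *)
    (forall t, 0 <= t <= T ->
       RInt (fun x => RInt (fun y => omega t x y) 0 1) 0 (2 * PI) = 0) ->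
    (* support in T x [theta0, 1 - theta0] *)
    (forall t x y, 0 <= t <= T -> 0 <= y <= 1 -> (y < theta0 \/ 1 - theta0 < y) ->
       omega t x y = 0) ->
    (* smallness of <omega> in H^10 *)
    (forall t, 0 <= t <= T -> H10norm (fun y => avgz omega t y) < eps) ->
  exists c0 : R,
    (forall t y, 0 <= t <= T -> (0 <= y <= theta0 \/ 1 - theta0 <= y <= 1) ->
       avgz (ux psi) t y = c0) /\
    (* v(t,.) is a bijection [0,1] -> [c0, c0+1] *)
    (forall t y, 0 < t <= T -> 0 <= y <= 1 ->
       c0 <= vmap psi t y <= c0 + 1) /\
    (forall t w, 0 < t <= T -> c0 <= w <= c0 + 1 ->
       exists y, (0 <= y <= 1 /\ vmap psi t y = w) /\
         forall y', 0 <= y' <= 1 -> vmap psi t y' = w -> y' = y) /\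
    forall (f phi : R -> R -> R -> R) (V1 V2 Vd : R -> R -> R),
      (* definitions of the new unknowns, z = x - t v, v = vmap psi t y *)
      (forall t x y, 0 < t <= T -> 0 <= y <= 1 ->
         f t (x - t * vmap psi t y) (vmap psi t y) = omega t x y /\
         phi t (x - t * vmap psi t y) (vmap psi t y) = psi t x y /\
         V1 t (vmap psi t y) = Derive (fun s => vmap psi t s) y /\
         V2 t (vmap psi t y) = Derive (fun s => Derive (fun r => vmap psi t r) s) y /\
         Vd t (vmap psi t y) = Derive (fun s => vmap psi s y) t) ->
      let H := fun t w => t * V1 t w * dw2 Vd t w in
      (* H = 1 - V' - <f> *)
      (forall t w, 0 < t <= T -> c0 < w < c0 + 1 ->
         H t w = 1 - V1 t w - avgz f t w) /\
      (* supports *)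
      (forall t z w, 0 < t <= T -> c0 <= w <= c0 + 1 ->
         (w < c0 + theta0 \/ c0 + 1 - theta0 < w) ->
         f t z w = 0 /\ V1 t w - 1 = 0) /\
      (forall t w, 0 < t <= T -> c0 < w < c0 + 1 ->
         (w < c0 + theta0 \/ c0 + 1 - theta0 < w) -> H t w = 0) /\
      (* evolution equations *)
      (forall t z w, 0 < t < T -> c0 < w < c0 + 1 ->
         d_t f t z w =
           V1 t w * d_2 (Pne0 phi) t z w * d_1 f t z w
           - (Vd t w + V1 t w * d_1 phi t z w) * d_2 f t z w) /\
      (forall t w, 0 < t < T -> c0 < w < c0 + 1 ->
         dt2 (fun s r => V1 s r - 1) t w =
           H t w / t - Vd t w * dw2 (fun s r => V1 s r - 1) t w) /\
      (forall t w, 0 < t < T -> c0 < w < c0 + 1 ->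
         dt2 H t w =
           - (H t w / t) - Vd t w * dw2 H t w
           - V1 t w * avgz (fun s z r => d_2 (Pne0 phi) s z r * d_1 f s z r) t w
           + V1 t w * avgz (fun s z r => d_1 phi s z r * d_2 f s z r) t w) /\
      (* elliptic equation for phi: dz^2 phi + V'^2 (dv - t dz)^2 phi + V'' (dv - t dz) phi = f *)
      (forall t z w, 0 < t <= T -> c0 < w < c0 + 1 ->
         let L := fun s a b => d_2 phi s a b - t * d_1 phi s a b in
         d_1 (d_1 phi) t z w
         + (V1 t w) ^ 2 * (d_2 L t z w - t * d_1 L t z w)
         + V2 t w * L t z w = f t z w) /\
      (* equations for Vdot and V'' *)
      (forall t w, 0 < t <= T -> c0 < w < c0 + 1 ->
         dw2 Vd t w = H t w / (t * V1 t w) /\ V2 t w = V1 t w * dw2 V1 t w) /\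
      (forall t, 0 < t <= T -> Vd t c0 = 0 /\ Vd t (1 + c0) = 0).
Proof.
  exists (/ 2). split. lra.
  intros theta0 T omega psi Hth Hth8 HT Hom Hps Hpo Hpp Htr Hlap Hbc Hmean Hsupp Hsmall.
  eapply main_concl; eauto.
Qed.
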